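(* For any $X \subseteq \omega$, if $\lambda\eta$ or $\lambda$ embeds in $\mathcal{K}_1^X$ then $K \le_T X$.
   Context: $K=\{e:\varphi_e(e)\downarrow\}$ is the halting set. $\lambda$ denotes the combinatory algebra of $\lambda$-terms modulo $\alpha\beta$-equivalence with application given by application of terms; $\lambda\eta$ denotes $\lambda$-terms modulo $\alpha\beta\eta$-equivalence. A pca is a set with a partial binary application operation containing distinct $\mathrm{s},\mathrm{k}$ with $\mathrm{k}ab\downarrow=a$, $\mathrm{s}ab\downarrow$, $\mathrm{s}abc\simeq(ac)(bc)$. An embedding of pcas is an injective map $f$ with: if $ab$ is defined then $f(a)f(b)$ is defined and equals $f(ab)$. $\mathcal{K}_1^X$ is the pca on $\omega$ with $n\cdot m=\Phi^X_n(m)$, the $n$-th partial $X$-computable function applied to $m$. *)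

(* Defs.v *)
From Stdlib Require Import Arith List Relations Cantor.
Import ListNotations.

(* ---------- lambda-terms (de Bruijn indices; alpha-equivalence is built in) *)
Inductive term : Type :=
| Var : nat -> term
| App : term -> term -> term
| Lam : term -> term.

Fixpoint lift (k c : nat) (t : term) : term :=
  match t with
  | Var n => if n <? c then Var n else Var (n + k)
  | App t1 t2 => App (lift k c t1) (lift k c t2)
  | Lam t1 => Lam (lift k (S c) t1)
  end.

Fixpoint subst (t : term) (k : nat) (u : term) : term :=
  match t with
  | Var n => if n =? k then lift k 0 u
             else if k <? n then Var (pred n) else Var n
  | App t1 t2 => App (subst t1 k u) (subst t2 k u)
  | Lam t1 => Lam (subst t1 (S k) u)
  end.

Inductive beta_step : term -> term -> Prop :=
| b_beta : forall t u, beta_step (App (Lam t) u) (subst t 0 u)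
| b_appl : forall t t' u, beta_step t t' -> beta_step (App t u) (App t' u)
| b_appr : forall t u u', beta_step u u' -> beta_step (App t u) (App t u')
| b_lam  : forall t t', beta_step t t' -> beta_step (Lam t) (Lam t').

Inductive betaeta_step : term -> term -> Prop :=
| be_beta : forall t u, betaeta_step (App (Lam t) u) (subst t 0 u)
| be_eta  : forall t, betaeta_step (Lam (App (lift 1 0 t) (Var 0))) t
| be_appl : forall t t' u, betaeta_step t t' -> betaeta_step (App t u) (App t' u)
| be_appr : forall t u u', betaeta_step u u' -> betaeta_step (App t u) (App t u')
| be_lam  : forall t t', betaeta_step t t' -> betaeta_step (Lam t) (Lam t').

Definition beta_conv : relation term := clos_refl_sym_trans term beta_step.
Definition betaeta_conv : relation term := clos_refl_sym_trans term betaeta_step.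

Inductive instr : Type :=
| Inc : nat -> instr
| Dec : nat -> nat -> instr
| Orc : nat -> instr.

Definition prog := list instr.

Definition decode_instr (a : nat) : instr :=
  match a mod 3 with
  | 0 => Inc (a / 3)
  | 1 => let '(r, j) := Cantor.of_nat (a / 3) in Dec r j
  | _ => Orc (a / 3)
  end.

Fixpoint decode_prog_aux (fuel n : nat) : prog :=
  match fuel with
  | 0 => []
  | S fuel' =>
      match n with
      | 0 => []
      | S n' => let '(a, b) := Cantor.of_nat n' in
                decode_instr a :: decode_prog_aux fuel' b
      end
  end.

(* Goedel numbering: every program has a code *)
Definition decode (e : nat) : prog := decode_prog_aux e e.

Definition regs := nat -> nat.
Definition upd (s : regs) (r v : nat) : regs :=
  fun i => if i =? r then v else s i.

(* run with step bound; halts (with output in register 0) when the program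
   counter leaves the program *)
Fixpoint run (X : nat -> bool) (p : prog) (fuel pc : nat) (s : regs) : option nat :=
  match nth_error p pc with
  | None => Some (s 0)
  | Some i =>
      match fuel with
      | 0 => None
      | S fuel' =>
          match i with
          | Inc r => run X p fuel' (S pc) (upd s r (S (s r)))
          | Dec r j => match s r with
                       | 0 => run X p fuel' j s
                       | S v => run X p fuel' (S pc) (upd s r v)
                       end
          | Orc r => run X p fuel' (S pc) (upd s r (if X (s r) then 1 else 0))
          end
      end
  end.

Definition init (m : nat) : regs := fun i => if i =? 0 then m else 0.

Definition Phi (X : nat -> bool) (e m v : nat) : Prop :=
  exists fuel, run X (decode e) fuel 0 (init m) = Some v.

Definition K1_app (X : nat -> bool) (n m v : nat) : Prop := Phi X n m v.

(* A map from terms/conv into omega is represented by f : term -> nat that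
   respects conv; injectivity on the quotient means f t = f u -> conv t u.
   Application in the term model is total, so the embedding condition reads:
   f(t) . f(u) is defined and equals f(App t u). *)
Definition embeds_in_K1 (conv : relation term) (X : nat -> bool) : Prop :=
  exists f : term -> nat,
    (forall t u, conv t u -> f t = f u) /\
    (forall t u, f t = f u -> conv t u) /\
    (forall t u, K1_app X (f t) (f u) (f (App t u))).

Definition empty_oracle : nat -> bool := fun _ => false.

Definition K (e : nat) : Prop := exists v, Phi empty_oracle e e v.

Definition turing_reducible (A : nat -> Prop) (X : nat -> bool) : Prop :=
  exists e, forall m, (A m -> Phi X e m 1) /\ (~ A m -> Phi X e m 0).

(* Main.v *)
Require Import Defs.
From Stdlib Require Import Arith Lia List Relations Cantor FunctionalExtensionality PropExtensionality Setoid Morphisms Bool.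
Import ListNotations.

Ltac nat_cases := repeat match goal with
 | |- context [?a <? ?b] => destruct (Nat.ltb_spec a b)
 | |- context [?a =? ?b] => destruct (Nat.eqb_spec a b)
 end.

Ltac var_solve := simpl; nat_cases; simpl; nat_cases; try (f_equal; lia); try lia.

Lemma lift_0 t c : lift 0 c t = t.
Proof. revert c; induction t; intros c; simpl; f_equal; auto.
  nat_cases; f_equal; lia. Qed.

Lemma lift_lift t : forall k j c c', c <= c' <= c + j ->
  lift k c' (lift j c t) = lift (k+j) c t.
Proof. induction t; intros k j c c' H; simpl.
 - var_solve.
 - f_equal; auto.
 - f_equal; apply IHt; lia. Qed.

Lemma lift_perm t : forall j k c c', c <= c' ->
  lift j (c'+k) (lift k c t) = lift k c (lift j c' t).
Proof. induction t; intros j k c c' H; simpl.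
 - var_solve.
 - f_equal; auto.
 - f_equal. replace (S (c'+k)) with (S c' + k) by lia. apply IHt; lia. Qed.

Lemma lift_subst_lo t : forall n c p u, p <= c ->
  lift n c (subst t p u) = subst (lift n (S c) t) p (lift n (c - p) u).
Proof. induction t; intros m c p u H; simpl.
 - destruct (Nat.eqb_spec n p).
   + subst. destruct (Nat.ltb_spec p (S c)); [|lia]. simpl. rewrite Nat.eqb_refl.
     rewrite <- (lift_perm u m p 0 (c-p)) by lia. f_equal; lia.
   + var_solve.
 - f_equal; auto.
 - f_equal. rewrite IHt by lia. f_equal. Qed.

Lemma lift_subst_hi t : forall n c p u, c <= p ->
  lift n c (subst t p u) = subst (lift n c t) (p+n) u.
Proof. induction t; intros m c p u H; simpl.
 - destruct (Nat.eqb_spec n p).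
   + subst. destruct (Nat.ltb_spec p c); [lia|]. simpl. rewrite Nat.eqb_refl.
     rewrite lift_lift by lia. f_equal; lia.
   + var_solve.
 - f_equal; auto.
 - f_equal. rewrite IHt by lia. f_equal. Qed.

Lemma subst_lift_simpl t : forall n c p u, c <= p <= c + n ->
  subst (lift (S n) c t) p u = lift n c t.
Proof. induction t; intros m c p u H; simpl.
 - var_solve.
 - f_equal; auto.
 - f_equal. apply IHt; lia. Qed.

Lemma subst_subst t : forall p n u v,
  subst (subst t p u) (p+n) v = subst (subst t (S (p+n)) v) p (subst u n v).
Proof. induction t; intros p m u v; simpl.
 - destruct (Nat.eqb_spec n p).
   + subst. destruct (Nat.eqb_spec p (S (p+m))); [lia|].
     destruct (Nat.ltb_spec (S (p+m)) p); [lia|]. simpl. rewrite Nat.eqb_refl.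
     rewrite (lift_subst_hi u p 0 m v) by lia. f_equal; lia.
   + destruct (Nat.eqb_spec n (S (p+m))).
     * subst. destruct (Nat.ltb_spec p (S (p+m))); [|lia]. simpl.
       rewrite Nat.eqb_refl. rewrite subst_lift_simpl by lia. reflexivity.
     * var_solve.
 - f_equal; auto.
 - f_equal. replace (S (p+m)) with (S p + m) by lia. rewrite IHt. f_equal. Qed.

Lemma subst_lift1_var0 t : forall k, subst (lift 1 (S k) t) k (Var 0) = t.
Proof. induction t; intros k; simpl.
 - var_solve; rewrite lift_0; simpl; f_equal; lia.
 - f_equal; auto.
 - f_equal; auto. Qed.

Lemma lift_inj t : forall u k c, lift k c t = lift k c u -> t = u.
Proof. induction t; intros u k c H; destruct u; simpl in H; try discriminate;
  try (revert H; nat_cases; discriminate).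
 - revert H; nat_cases; intros HH; injection HH; intros; f_equal; lia.
 - injection H; intros; f_equal; eauto.
 - injection H; intros; f_equal; eauto. Qed.

Inductive star {A} (R : A -> A -> Prop) : A -> A -> Prop :=
| st_refl x : star R x x
| st_step x y z : R x y -> star R y z -> star R x z.
Arguments st_refl {A R x}.

Lemma star_trans {A} (R : A -> A -> Prop) x y z : star R x y -> star R y z -> star R x z.
Proof. induction 1; eauto using star. Qed.
Lemma star_one {A} (R : A -> A -> Prop) x y : R x y -> star R x y.
Proof. eauto using star. Qed.
Lemma star_map {A} (R S : A -> A -> Prop) (f : A -> A) :
  (forall x y, R x y -> S (f x) (f y)) -> forall x y, star R x y -> star S (f x) (f y).
Proof. induction 2; eauto using star. Qed.
Lemma star_mono {A} (R S : A -> A -> Prop) :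
  (forall x y, R x y -> S x y) -> forall x y, star R x y -> star S x y.
Proof. induction 2; eauto using star. Qed.

Inductive eta_step : term -> term -> Prop :=
| e_eta t : eta_step (Lam (App (lift 1 0 t) (Var 0))) t
| e_appl t t' u : eta_step t t' -> eta_step (App t u) (App t' u)
| e_appr t u u' : eta_step u u' -> eta_step (App t u) (App t u')
| e_lam t t' : eta_step t t' -> eta_step (Lam t) (Lam t').

Lemma betaeta_split t u : betaeta_step t u -> beta_step t u \/ eta_step t u.
Proof. induction 1; try destruct IHbetaeta_step; eauto using beta_step, eta_step. Qed.
Lemma beta_be t u : beta_step t u -> betaeta_step t u.
Proof. induction 1; eauto using betaeta_step. Qed.
Lemma eta_be t u : eta_step t u -> betaeta_step t u.
Proof. induction 1; eauto using betaeta_step. Qed.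

Lemma beta_lift t t' : beta_step t t' -> forall k c, beta_step (lift k c t) (lift k c t').
Proof. induction 1; intros k c; simpl; eauto using beta_step.
  rewrite lift_subst_lo by lia. rewrite Nat.sub_0_r. constructor. Qed.

Lemma eta_lift t t' : eta_step t t' -> forall k c, eta_step (lift k c t) (lift k c t').
Proof. induction 1; intros k c; simpl; eauto using eta_step.
  replace (S c) with (c + 1) by lia. rewrite (lift_perm t k 1 0 c) by lia. constructor. Qed.

Lemma eta_subst_l t t' : eta_step t t' -> forall k u, eta_step (subst t k u) (subst t' k u).
Proof. induction 1; intros k v; simpl; eauto using eta_step.
  replace (S k) with (k + 1) by lia. rewrite <- (lift_subst_hi t 1 0 k v) by lia. constructor. Qed.

Lemma star_eta_app t t' u u' : star eta_step t t' -> star eta_step u u' ->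
  star eta_step (App t u) (App t' u').
Proof. intros H1 H2. apply star_trans with (App t' u).
  apply (star_map eta_step eta_step (fun x => App x u)); eauto using eta_step.
  apply (star_map eta_step eta_step (fun x => App t' x)); eauto using eta_step. Qed.
Lemma star_eta_lam t t' : star eta_step t t' -> star eta_step (Lam t) (Lam t').
Proof. apply (star_map eta_step eta_step Lam); eauto using eta_step. Qed.

Lemma eta_star_subst_r t : forall k u u', eta_step u u' -> star eta_step (subst t k u) (subst t k u').
Proof. induction t; intros k u u' H; simpl.
 - destruct (n =? k). apply star_one, eta_lift; auto. destruct (k <? n); constructor.
 - apply star_eta_app; auto.
 - apply star_eta_lam; auto. Qed.

Lemma lift_lam_inv k c t s : lift k c t = Lam s -> exists s0, t = Lam s0 /\ s = lift k (S c) s0.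
Proof. destruct t; simpl; try (destruct (n <? c)); intros H; try discriminate.
  injection H; intros; subst; eauto. Qed.
Lemma lift_app_inv k c t a b : lift k c t = App a b -> exists a0 b0, t = App a0 b0 /\ a = lift k c a0 /\ b = lift k c b0.
Proof. destruct t; simpl; try (destruct (n <? c)); intros H; try discriminate.
  injection H; intros; subst; eauto. Qed.

Lemma beta_lift_inv t : forall k c w, beta_step (lift k c t) w -> exists t', w = lift k c t' /\ beta_step t t'.
Proof. induction t; intros k c w H; simpl in H.
 - destruct (n <? c); inversion H.
 - inversion H; subst.
   + destruct (lift_lam_inv _ _ _ _ (eq_sym H1)) as [s0 [-> ->]].
     exists (subst s0 0 t2). split; [|constructor].
     rewrite lift_subst_lo by lia. rewrite Nat.sub_0_r. reflexivity.
   + destruct (IHt1 _ _ _ H3) as [x [-> Hx]]. exists (App x t2); simpl; eauto using beta_step.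
   + destruct (IHt2 _ _ _ H3) as [x [-> Hx]]. exists (App t1 x); simpl; eauto using beta_step.
 - inversion H; subst. destruct (IHt _ _ _ H1) as [x [-> Hx]]. exists (Lam x); simpl; eauto using beta_step. Qed.

Lemma unlift s : forall k c d w, d <= c -> lift k (S c) s = lift 1 d w ->
  exists w', s = lift 1 d w' /\ w = lift k c w'.
Proof. induction s; intros k c d w Hd H.
 - destruct w; simpl in H; [| revert H; nat_cases; discriminate..].
   revert H; nat_cases; intros HH; injection HH; intros E;
   exists (Var (if n <? d then n else n - 1)); simpl; nat_cases; split; f_equal; lia.
 - destruct w; simpl in H; try (destruct (n <? d)); try discriminate.
   injection H; intros H1 H2. destruct (IHs1 _ _ _ _ Hd H2) as [a [-> ->]].
   destruct (IHs2 _ _ _ _ Hd H1) as [b [-> ->]]. exists (App a b); auto.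
 - destruct w; simpl in H; try (destruct (n <? d)); try discriminate.
   injection H; intros H1. destruct (IHs _ (S c) (S d) _ ltac:(lia) H1) as [a [-> ->]].
   exists (Lam a); auto. Qed.

Lemma eta_lift_inv t : forall k c w, eta_step (lift k c t) w -> exists t', w = lift k c t' /\ eta_step t t'.
Proof. induction t; intros k c w H; simpl in H.
 - destruct (n <? c); inversion H.
 - inversion H; subst.
   + destruct (IHt1 _ _ _ H3) as [x [-> Hx]]. exists (App x t2); simpl; eauto using eta_step.
   + destruct (IHt2 _ _ _ H3) as [x [-> Hx]]. exists (App t1 x); simpl; eauto using eta_step.
 - inversion H; subst.
   + destruct (lift_app_inv _ _ _ _ _ (eq_sym H1)) as [a [b [-> [Ha Hb]]]].
     destruct b as [nb| |]; simpl in Hb; try discriminate. revert Hb; nat_cases; intros Hb; try discriminate;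
     injection Hb; intros En; [|lia]. subst nb. destruct (unlift a k c 0 w ltac:(lia) (eq_sym Ha)) as [w' [-> ->]].
     exists w'; split; auto. constructor.
   + destruct (IHt _ _ _ H1) as [x [-> Hx]]. exists (Lam x); simpl; eauto using eta_step. Qed.

Inductive par : term -> term -> Prop :=
| p_var n : par (Var n) (Var n)
| p_app t t' u u' : par t t' -> par u u' -> par (App t u) (App t' u')
| p_lam t t' : par t t' -> par (Lam t) (Lam t')
| p_beta t t' u u' : par t t' -> par u u' -> par (App (Lam t) u) (subst t' 0 u').

Lemma par_refl t : par t t.
Proof. induction t; constructor; auto. Qed.

Lemma beta_par t u : beta_step t u -> par t u.
Proof. induction 1; constructor; auto using par_refl. Qed.

Lemma star_beta_app t t' u u' : star beta_step t t' -> star beta_step u u' ->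
  star beta_step (App t u) (App t' u').
Proof. intros H1 H2. apply star_trans with (App t' u).
  apply (star_map beta_step beta_step (fun x => App x u)); eauto using beta_step.
  apply (star_map beta_step beta_step (fun x => App t' x)); eauto using beta_step. Qed.
Lemma star_beta_lam t t' : star beta_step t t' -> star beta_step (Lam t) (Lam t').
Proof. apply (star_map beta_step beta_step Lam); eauto using beta_step. Qed.

Lemma par_star t u : par t u -> star beta_step t u.
Proof. induction 1.
 - constructor.
 - apply star_beta_app; auto.
 - apply star_beta_lam; auto.
 - apply star_trans with (App (Lam t') u'). apply star_beta_app; auto. apply star_beta_lam; auto.
   apply star_one; constructor. Qed.

Lemma par_lift t t' : par t t' -> forall k c, par (lift k c t) (lift k c t').
Proof. induction 1; intros k c; simpl.
 - apply par_refl.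
 - constructor; auto.
 - constructor; auto.
 - rewrite lift_subst_lo by lia. rewrite Nat.sub_0_r. constructor; auto. Qed.

Lemma par_subst t t' : par t t' -> forall u u' k, par u u' -> par (subst t k u) (subst t' k u').
Proof. induction 1; intros v v' k Hv; simpl.
 - destruct (n =? k). apply par_lift; auto. destruct (k <? n); constructor.
 - constructor; auto.
 - constructor; auto.
 - pose proof (subst_subst t' 0 k u' v') as E. simpl in E. rewrite E. constructor; auto. Qed.

Lemma par_diamond t t1 : par t t1 -> forall t2, par t t2 -> exists t3, par t1 t3 /\ par t2 t3.
Proof. induction 1; intros t2 H2.
 - inversion H2; subst. exists (Var n); split; constructor.
 - inversion H2 as [| ? a1 ? b1 Ha Hb | | s0 s1 ? b1 Ha Hb]; subst.
   + destruct (IHpar1 _ Ha) as [a [Ha1 Ha2]]. destruct (IHpar2 _ Hb) as [b [Hb1 Hb2]].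
     exists (App a b); split; constructor; auto.
   + inversion H as [| | ? t1' Ht1 |]; subst.
     destruct (IHpar1 (Lam s1)) as [a [Ha1 Ha2]]. constructor; auto.
     inversion Ha1 as [| | ? a0 Hq1 |]; subst. inversion Ha2 as [| | ? ? Hq2 |]; subst.
     destruct (IHpar2 _ Hb) as [b [Hb1 Hb2]].
     exists (subst a0 0 b); split. constructor; auto. apply par_subst; auto.
 - inversion H2; subst. destruct (IHpar _ H1) as [a [Ha1 Ha2]]. exists (Lam a); split; constructor; auto.
 - inversion H2 as [| ? a1 ? b1 Ha Hb | | s0 s1 ? b1 Ha Hb]; subst.
   + inversion Ha as [| | ? a2 Ha' |]; subst. destruct (IHpar1 _ Ha') as [a [Ha1 Ha2]].
     destruct (IHpar2 _ Hb) as [b [Hb1 Hb2]].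
     exists (subst a 0 b); split. apply par_subst; auto. constructor; auto.
   + destruct (IHpar1 _ Ha) as [a [Ha1 Ha2]]. destruct (IHpar2 _ Hb) as [b [Hb1 Hb2]].
     exists (subst a 0 b); split; apply par_subst; auto. Qed.

Definition diamond_eq {A} (R : A -> A -> Prop) := forall a b c, R a b -> R a c ->
  exists d, (R b d \/ b = d) /\ (R c d \/ c = d).

Lemma strip {A} (R : A -> A -> Prop) : diamond_eq R -> forall a c, star R a c -> forall b, R a b ->
  exists d, star R b d /\ (R c d \/ c = d).
Proof. intros HD a c H. induction H; intros b Hb.
 - exists b; split; [constructor| auto].
 - destruct (HD _ _ _ Hb H) as [d [[Hd1|Hd1] [Hd2|Hd2]]].
   + destruct (IHstar _ Hd2) as [e [He1 He2]]. exists e; split; eauto using star.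
   + subst. exists z; split; eauto using star.
   + subst. destruct (IHstar _ Hd2) as [e [He1 He2]]. exists e; split; eauto using star.
   + subst. exists z; split; auto. Qed.

Lemma confl {A} (R : A -> A -> Prop) : diamond_eq R -> forall a b c, star R a b -> star R a c ->
  exists d, star R b d /\ star R c d.
Proof. intros HD a b c H. revert c. induction H; intros c Hc.
 - exists c; split; [exact Hc | apply st_refl].
 - destruct (strip R HD _ _ Hc _ H) as [d [Hd1 Hd2]].
   destruct (IHstar _ Hd1) as [e [He1 He2]]. exists e; split; auto.
   destruct Hd2 as [Hd2|Hd2]; subst; eauto using star. Qed.

Lemma beta_confl a b c : star beta_step a b -> star beta_step a c ->
  exists d, star beta_step b d /\ star beta_step c d.
Proof. intros H1 H2.
  assert (E : forall x y, star beta_step x y -> star par x y) by (apply star_mono, beta_par).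
  assert (E' : forall x y, star par x y -> star beta_step x y).
  { induction 1; eauto using star_trans, par_star, star. }
  destruct (confl par) with a b c as [d [H3 H4]]; auto.
  intros x y z Hy Hz. destruct (par_diamond _ _ Hy _ Hz) as [d [? ?]]; eauto.
  eauto. Qed.

Lemma eta_diamond : diamond_eq eta_step.
Proof. intros a b c H. revert c. induction H as [t|t t' u Ht IH|t u u' Hu IH|t t' Ht IH]; intros c Hc.
 - inversion Hc as [t0 E | | | ? c0 Hc0 E]; subst.
   + apply lift_inj in E. subst. eauto.
   + inversion Hc0 as [| ? w ? Hw | ? ? ? Hw |]; subst.
     * destruct (eta_lift_inv _ _ _ _ Hw) as [t' [-> Ht']].
       exists t'; split; auto. left; constructor.
     * inversion Hw.
 - inversion Hc as [ | ? t2 ? H2 | ? ? u2 H2 | ]; subst.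
   + destruct (IH _ H2) as [d [Hd1 Hd2]]. exists (App d u); split;
     [destruct Hd1 | destruct Hd2]; subst; auto; left; constructor; auto.
   + exists (App t' u2); split; left; constructor; auto.
 - inversion Hc as [ | ? t2 ? H2 | ? ? u2 H2 | ]; subst.
   + exists (App t2 u'); split; left; constructor; auto.
   + destruct (IH _ H2) as [d [Hd1 Hd2]]. exists (App t d); split;
     [destruct Hd1 | destruct Hd2]; subst; auto; left; constructor; auto.
 - inversion Hc as [t0 E | | | ? c0 Hc0 E]; subst.
   + inversion Ht as [| ? w ? Hw | ? ? ? Hw |]; subst.
     * destruct (eta_lift_inv _ _ _ _ Hw) as [t'' [-> Ht']].
       exists t''; split; auto. left; constructor.
     * inversion Hw.
   + destruct (IH _ Hc0) as [d [Hd1 Hd2]]. exists (Lam d); split;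
     [destruct Hd1 | destruct Hd2]; subst; auto; left; constructor; auto. Qed.

Lemma comm1 a c : eta_step a c -> forall b, beta_step a b ->
  exists d, star eta_step b d /\ (beta_step c d \/ c = d).
Proof. induction 1 as [t|t t' u Ht IH|t u u' Hu IH|t t' Ht IH]; intros b Hb.
 - inversion Hb as [| | | ? b0 Hb0]; subst.
   inversion Hb0 as [s ? E | ? w ? Hw | ? ? ? Hw |]; subst.
   + destruct (lift_lam_inv _ _ _ _ (eq_sym E)) as [s0 [-> ->]].
     rewrite subst_lift1_var0. exists (Lam s0); split; [apply st_refl| auto].
   + destruct (beta_lift_inv _ _ _ _ Hw) as [t' [-> Ht']].
     exists t'; split; auto. apply star_one; constructor.
   + inversion Hw.
 - inversion Hb as [s ? E | ? t2 ? H2 | ? ? u2 H2 |]; subst.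
   + inversion Ht as [t0 E | | | ? s' Hs E]; subst.
     * simpl. rewrite subst_lift_simpl by lia. rewrite !lift_0.
       exists (App t' u); split; [apply st_refl| auto].
     * exists (subst s' 0 u); split. apply star_one, eta_subst_l; auto. left; constructor.
   + destruct (IH _ H2) as [d0 [Hd1 Hd2]]. exists (App d0 u); split.
     apply star_eta_app; auto using st_refl. destruct Hd2; [left; constructor; auto | right; subst; auto].
   + exists (App t' u2); split. apply star_one; constructor; auto. left; constructor; auto.
 - inversion Hb as [s ? E | ? t2 ? H2 | ? ? u2 H2 |]; subst.
   + exists (subst s 0 u'); split. apply eta_star_subst_r; auto. left; constructor.
   + exists (App t2 u'); split. apply star_one; constructor; auto. left; constructor; auto.
   + destruct (IH _ H2) as [d0 [Hd1 Hd2]]. exists (App t d0); split.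
     apply star_eta_app; auto using st_refl. destruct Hd2; [left; constructor; auto | right; subst; auto].
 - inversion Hb as [| | | ? b0 Hb0]; subst.
   destruct (IH _ Hb0) as [d0 [Hd1 Hd2]]. exists (Lam d0); split.
   apply star_eta_lam; auto. destruct Hd2; [left; constructor; auto | right; subst; auto].
Qed.

Lemma comm_strip a c : star eta_step a c -> forall b, beta_step a b ->
  exists d, star eta_step b d /\ (beta_step c d \/ c = d).
Proof. induction 1 as [x|x y z Hxy Hyz IH]; intros b Hb.
 - exists b; split; [apply st_refl | auto].
 - destruct (comm1 _ _ Hxy _ Hb) as [d1 [Hd1 [Hd2|Hd2]]].
   + destruct (IH _ Hd2) as [d [H1 H2]]. exists d; split; eauto using star_trans.
   + subst. exists z; split; eauto using star_trans. Qed.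

Lemma comm_full a b : star beta_step a b -> forall c, star eta_step a c ->
  exists d, star eta_step b d /\ star beta_step c d.
Proof. induction 1 as [x|x y z Hxy Hyz IH]; intros c Hc.
 - exists c; split; [auto | apply st_refl].
 - destruct (comm_strip _ _ Hc _ Hxy) as [d1 [Hd1 Hd2]].
   destruct (IH _ Hd1) as [d [H1 H2]]. exists d; split; auto.
   destruct Hd2; subst; eauto using star. Qed.

Definition TT x y := star beta_step x y \/ star eta_step x y.

Lemma TT_diamond : diamond_eq TT.
Proof. intros a b c [H1|H1] [H2|H2].
 - destruct (beta_confl _ _ _ H1 H2) as [d [? ?]]. exists d; split; left; left; auto.
 - destruct (comm_full _ _ H1 _ H2) as [d [? ?]]. exists d; split; left; [right|left]; auto.
 - destruct (comm_full _ _ H2 _ H1) as [d [? ?]]. exists d; split; left; [left|right]; auto.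
 - destruct (confl eta_step eta_diamond _ _ _ H1 H2) as [d [? ?]]. exists d; split; left; right; auto.
Qed.

Lemma betaeta_confl a b c : star betaeta_step a b -> star betaeta_step a c ->
  exists d, star betaeta_step b d /\ star betaeta_step c d.
Proof. intros H1 H2.
  assert (E : forall x y, star betaeta_step x y -> star TT x y).
  { apply star_mono. intros x y H. destruct (betaeta_split _ _ H); [left|right]; apply star_one; auto. }
  assert (E' : forall x y, star TT x y -> star betaeta_step x y).
  { induction 1 as [|x y z Hxy _ IH]; [apply st_refl|]. apply star_trans with y; auto.
    destruct Hxy as [Hxy|Hxy]; [apply (star_mono _ _ beta_be) | apply (star_mono _ _ eta_be)]; auto. }
  destruct (confl TT TT_diamond a b c) as [d [H3 H4]]; auto. eauto. Qed.

Lemma church_rosser t u : betaeta_conv t u ->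
  exists w, star betaeta_step t w /\ star betaeta_step u w.
Proof. induction 1 as [x y H|x|x y H IH|x y z H1 IH1 H2 IH2].
 - exists y; split; [apply star_one; auto | apply st_refl].
 - exists x; split; apply st_refl.
 - destruct IH as [w [? ?]]; eauto.
 - destruct IH1 as [w1 [A1 B1]]. destruct IH2 as [w2 [A2 B2]].
   destruct (betaeta_confl _ _ _ B1 A2) as [w [C1 C2]].
   exists w; split; eauto using star_trans. Qed.

Definition TRUE := Lam (Lam (Var 1)).
Definition FALSE := Lam (Lam (Var 0)).

Lemma TRUE_normal w : star betaeta_step TRUE w -> w = TRUE.
Proof. intros H. inversion H as [|x y z Hs]; subst; auto.
  exfalso. inversion Hs as [| t E | | | ? ? Hs']; subst.
  inversion Hs' as [| t E | | | ? ? Hs'']; subst. inversion Hs''. Qed.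


Definition Dm := nat -> Prop.
Definition fin (e : nat) : Dm := fun k => Nat.testbit e k = true.
Definition sub (A B : Dm) := forall x, A x -> B x.
Definition papp (F X : Dm) : Dm := fun x => exists e, sub (fin e) X /\ F (Cantor.to_nat (e, x)).
Definition plam (P : Dm -> Dm) : Dm := fun c => P (fin (fst (Cantor.of_nat c))) (snd (Cantor.of_nat c)).
Definition scons (d : Dm) (r : nat -> Dm) : nat -> Dm := fun n => match n with 0 => d | S n => r n end.

Fixpoint sem (t : term) (r : nat -> Dm) : Dm :=
  match t with
  | Var n => r n
  | App t u => papp (sem t r) (sem u r)
  | Lam t => plam (fun d => sem t (scons d r))
  end.

Lemma dm_ext (A B : Dm) : (forall x, A x <-> B x) -> A = B.
Proof. intros H; apply functional_extensionality; intros x; apply propositional_extensionality; auto. Qed.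

Lemma papp_mono F F' X X' : sub F F' -> sub X X' -> sub (papp F X) (papp F' X').
Proof. intros H1 H2 x [e [He Hf]]. exists e; split; auto. intros k Hk; auto. Qed.
Lemma plam_mono (P Q : Dm -> Dm) : (forall d, sub (P d) (Q d)) -> sub (plam P) (plam Q).
Proof. intros H x Hx. unfold plam in *. apply H; auto. Qed.

Lemma sem_mono t : forall r r', (forall n, sub (r n) (r' n)) -> sub (sem t r) (sem t r').
Proof. induction t; intros r r' H; simpl.
 - apply H.
 - apply papp_mono; auto.
 - apply plam_mono. intros d. apply IHt. intros [|n]; simpl; auto. intros x; auto. Qed.

Lemma testbit_lt e k : Nat.testbit e k = true -> k < e.
Proof. intros H. destruct (Nat.lt_ge_cases k e) as [|Hk]; auto. exfalso.
  apply Nat.testbit_true in H. rewrite Nat.div_small in H. discriminate.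
  apply Nat.lt_le_trans with (2 ^ e). apply Nat.pow_gt_lin_r; lia.
  apply Nat.pow_le_mono_r; lia. Qed.

Lemma fin_lor a b k : fin (Nat.lor a b) k <-> fin a k \/ fin b k.
Proof. unfold fin. rewrite Nat.lor_spec. destruct (Nat.testbit a k), (Nat.testbit b k); simpl; intuition. Qed.

Definition envj (s1 s2 : nat -> nat) := fun n => Nat.lor (s1 n) (s2 n).
Lemma envj_l s1 s2 n : sub (fin (s1 n)) (fin (envj s1 s2 n)).
Proof. intros k Hk. apply fin_lor; auto. Qed.
Lemma envj_r s1 s2 n : sub (fin (s2 n)) (fin (envj s1 s2 n)).
Proof. intros k Hk. apply fin_lor; auto. Qed.

Lemma sem_cont t : forall r x, sem t r x -> exists s : nat -> nat,
  (forall n, sub (fin (s n)) (r n)) /\ sem t (fun n => fin (s n)) x.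
Proof. induction t; intros r x H; simpl in *.
 - exists (fun i => if i =? n then 2 ^ x else 0). split.
   + intros i k Hk. unfold fin in Hk. destruct (Nat.eqb_spec i n).
     * subst. rewrite Nat.pow2_bits_eqb in Hk. apply Nat.eqb_eq in Hk. subst; auto.
     * rewrite Nat.bits_0 in Hk; discriminate.
   + rewrite Nat.eqb_refl. unfold fin. rewrite Nat.pow2_bits_eqb. apply Nat.eqb_refl.
 - destruct H as [e [He Hf]].
   destruct (IHt1 _ _ Hf) as [s1 [Hs1 Hs1']].
   assert (U : forall N, exists s, (forall n, sub (fin (s n)) (r n)) /\
      forall k, k < N -> fin e k -> sem t2 (fun n => fin (s n)) k).
   { induction N as [|N [s [Hs Hs']]].
     - exists (fun _ => 0). split. intros n k Hk. unfold fin in Hk; rewrite Nat.bits_0 in Hk; discriminate.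
       intros; lia.
     - destruct (Nat.testbit e N) eqn:EN.
       + destruct (IHt2 _ _ (He _ EN)) as [s2 [Hs2 Hs2']].
         exists (envj s s2). split.
         * intros n k Hk. apply fin_lor in Hk. destruct Hk; [apply Hs | apply Hs2]; auto.
         * intros k Hk Hek. destruct (Nat.eq_dec k N).
           -- subst. eapply sem_mono; [|apply Hs2']. intros n. apply envj_r.
           -- eapply sem_mono; [|apply Hs'; auto; lia]. intros i; apply envj_l.
       + exists s. split; auto. intros k Hk Hek. destruct (Nat.eq_dec k N).
         * subst. unfold fin in Hek. congruence.
         * apply Hs'; auto; lia. }
   destruct (U e) as [s2 [Hs2 Hs2']].
   exists (envj s1 s2). split.
   + intros n k Hk. apply fin_lor in Hk. destruct Hk; [apply Hs1 | apply Hs2]; auto.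
   + exists e. split.
     * intros k Hk. eapply sem_mono; [|apply Hs2']; auto. intros n; apply envj_r. apply testbit_lt; auto.
     * eapply sem_mono; [|apply Hs1']. intros n; apply envj_l.
 - unfold plam in H. destruct (IHt _ _ H) as [s [Hs Hs']].
   exists (fun n => s (S n)). split.
   + intros n. apply (Hs (S n)).
   + unfold plam. eapply sem_mono; [|apply Hs']. intros [|n]; simpl.
     * apply (Hs 0).
     * intros k; auto. Qed.

Lemma papp_plam t r X : papp (plam (fun d => sem t (scons d r))) X = sem t (scons X r).
Proof. apply dm_ext; intros x; split.
 - intros [e [He Hx]]. unfold plam in Hx. rewrite Cantor.cancel_of_to in Hx. simpl in Hx.
   eapply sem_mono; [|apply Hx]. intros [|n]; simpl; auto. intros k; auto.
 - intros Hx. destruct (sem_cont _ _ _ Hx) as [s [Hs Hs']].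
   exists (s 0). split. apply (Hs 0).
   unfold plam. rewrite Cantor.cancel_of_to. simpl. eapply sem_mono; [|apply Hs'].
   intros [|n]; simpl. intros k; auto. apply (Hs (S n)). Qed.

Lemma sem_lift t : forall k c r, sem (lift k c t) r = sem t (fun i => if i <? c then r i else r (i + k)).
Proof. induction t; intros k c r; simpl.
 - destruct (n <? c); reflexivity.
 - rewrite IHt1, IHt2; reflexivity.
 - f_equal. apply functional_extensionality; intros d. rewrite IHt. f_equal.
   apply functional_extensionality; intros [|i]; reflexivity. Qed.

Lemma sem_subst t : forall k u r, sem (subst t k u) r =
  sem t (fun i => if i <? k then r i else if i =? k then sem u (fun j => r (j + k)) else r (i - 1)).
Proof. induction t; intros k u r; simpl.
 - nat_cases; simpl; try lia; try reflexivity.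
   + f_equal; lia.
   + rewrite sem_lift. f_equal.
 - rewrite IHt1, IHt2; reflexivity.
 - f_equal. apply functional_extensionality; intros d. rewrite IHt. f_equal.
   apply functional_extensionality; intros [|i]; simpl; [reflexivity|].
   replace (S i <? S k) with (i <? k) by reflexivity.
   nat_cases; try lia; try reflexivity.
   + f_equal. apply functional_extensionality; intros j. replace (j + S k) with (S (j + k)) by lia. reflexivity.
   + destruct i; [lia|]. simpl. f_equal; lia. Qed.

Lemma sem_beta t u r : sem (App (Lam t) u) r = sem (subst t 0 u) r.
Proof. simpl. rewrite papp_plam, sem_subst. f_equal.
  apply functional_extensionality; intros [|i]; simpl; try reflexivity.
  f_equal. apply functional_extensionality; intros j. f_equal; lia.
  f_equal; lia. Qed.

Lemma sem_beta_step t u : beta_step t u -> forall r, sem t r = sem u r.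
Proof. induction 1; intros r; simpl.
 - apply sem_beta.
 - rewrite IHbeta_step; auto.
 - rewrite IHbeta_step; auto.
 - f_equal. apply functional_extensionality; intros d; auto. Qed.

Lemma sem_beta_conv t u : beta_conv t u -> forall r, sem t r = sem u r.
Proof. induction 1; intros r; auto using sem_beta_step. rewrite IHclos_refl_sym_trans1; auto. Qed.

Lemma sem_eta t r : sub (sem t r) (sem (Lam (App (lift 1 0 t) (Var 0))) r).
Proof. intros x Hx. simpl. unfold plam. rewrite sem_lift.
  exists (fst (Cantor.of_nat x)). split. intros k; simpl; auto.
  replace (fun i : nat => if i <? 0 then scons (fin (fst (of_nat x))) r i else scons (fin (fst (of_nat x))) r (i + 1)) with r.
  rewrite <- surjective_pairing, Cantor.cancel_to_of. auto.
  apply functional_extensionality; intros i. simpl. replace (i+1) with (S i) by lia. reflexivity. Qed.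

Lemma sem_be_step t u : betaeta_step t u -> forall r, sub (sem u r) (sem t r).
Proof. induction 1; intros r.
 - rewrite sem_beta. intros x; auto.
 - apply sem_eta.
 - simpl; apply papp_mono; auto. intros x; auto.
 - simpl; apply papp_mono; auto. intros x; auto.
 - simpl; apply plam_mono; auto. Qed.

Lemma sem_be_star t u : star betaeta_step t u -> forall r, sub (sem u r) (sem t r).
Proof. induction 1 as [|a b c Hab Hbc IH]; intros r v Hv; auto. apply (sem_be_step _ _ Hab). apply IH; auto. Qed.

Lemma sem_TRUE r : sem TRUE r (Cantor.to_nat (1, Cantor.to_nat (0, 0))).
Proof. exact eq_refl. Qed.

Lemma conv_TRUE_sem t : betaeta_conv t TRUE -> forall r, exists x, sem t r x.
Proof. intros H r. destruct (church_rosser _ _ H) as [w [H1 H2]].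
  apply TRUE_normal in H2. subst. exists (Cantor.to_nat (1, Cantor.to_nat (0, 0))).
  apply (sem_be_star _ _ H1). apply sem_TRUE. Qed.

Fixpoint closedb (n : nat) (t : term) : bool :=
  match t with
  | Var i => i <? n
  | App a b => closedb n a && closedb n b
  | Lam a => closedb (S n) a
  end.

Lemma sem_closed t : forall n r r', closedb n t = true -> (forall i, i < n -> r i = r' i) -> sem t r = sem t r'.
Proof. induction t; intros m r r' Hc H; simpl in *.
 - apply H. apply Nat.ltb_lt; auto.
 - apply Bool.andb_true_iff in Hc. destruct Hc. erewrite IHt1, IHt2; eauto.
 - f_equal. apply functional_extensionality; intros d. apply (IHt (S m)); auto.
   intros [|i] Hi; simpl; auto. apply H; lia. Qed.

Notation conv := beta_conv.

#[export] Instance conv_equiv : Equivalence beta_conv.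
Proof. split.
 - intros x; apply rst_refl.
 - intros x y H; apply rst_sym; auto.
 - intros x y z H1 H2; eapply rst_trans; eauto. Qed.

Lemma conv_map (f : term -> term) : (forall x y, beta_step x y -> beta_step (f x) (f y)) ->
  forall x y, conv x y -> conv (f x) (f y).
Proof. intros Hf x y H. induction H.
 - apply rst_step; auto.
 - apply rst_refl.
 - apply rst_sym; auto.
 - eapply rst_trans; eauto. Qed.

#[export] Instance App_proper : Proper (beta_conv ==> beta_conv ==> beta_conv) App.
Proof. intros a a' Ha b b' Hb. transitivity (App a' b).
  apply (conv_map (fun x => App x b)); auto using beta_step.
  apply (conv_map (fun x => App a' x)); auto using beta_step. Qed.

#[export] Instance Lam_proper : Proper (beta_conv ==> beta_conv) Lam.
Proof. intros a a' Ha. apply (conv_map Lam); auto using beta_step. Qed.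

Lemma beta_rule t u : conv (App (Lam t) u) (subst t 0 u).
Proof. apply rst_step; constructor. Qed.

Definition cl t := closedb 0 t = true.

Lemma closedb_mono t : forall n m, closedb n t = true -> n <= m -> closedb m t = true.
Proof. induction t; simpl; intros a b H Hab.
 - apply Nat.ltb_lt in H. apply Nat.ltb_lt. lia.
 - apply Bool.andb_true_iff in H. destruct H. rewrite (IHt1 a b), (IHt2 a b); auto.
 - apply (IHt (S a)); auto; lia. Qed.

Lemma lift_closedb t : forall k c, closedb c t = true -> lift k c t = t.
Proof. induction t; simpl; intros k c H.
 - rewrite H; auto.
 - apply Bool.andb_true_iff in H. destruct H. rewrite IHt1, IHt2; auto.
 - rewrite IHt; auto. Qed.

Lemma subst_closedb t : forall k u, closedb k t = true -> subst t k u = t.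
Proof. induction t; simpl; intros k u H.
 - apply Nat.ltb_lt in H. nat_cases; auto; lia.
 - apply Bool.andb_true_iff in H. destruct H. rewrite IHt1, IHt2; auto.
 - rewrite IHt; auto. Qed.

Lemma lift_cl t k c : cl t -> lift k c t = t.
Proof. intros H. apply lift_closedb. eapply closedb_mono; eauto; lia. Qed.
Lemma subst_cl t k u : cl t -> subst t k u = t.
Proof. intros H. apply subst_closedb. eapply closedb_mono; eauto; lia. Qed.
Lemma cl_App a b : cl a -> cl b -> cl (App a b).
Proof. unfold cl; simpl; intros -> ->; auto. Qed.

Create HintDb clos.
#[export] Hint Resolve cl_App : clos.
Ltac clos := solve [assumption | reflexivity | eauto 20 with clos].

Ltac sbst := cbn [subst lift Nat.eqb Nat.ltb Nat.leb Nat.pred Nat.add]; repeat first [ rewrite lift_0 | rewrite lift_cl by clos | rewrite subst_cl by clos ].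
Ltac beta := rewrite beta_rule; sbst.

Definition num (n : nat) := Lam (Lam (Nat.iter n (App (Var 1)) (Var 0))).
Arguments num : simpl never.

Lemma cl_num n : cl (num n).
Proof. unfold cl, num. simpl. induction n; simpl; auto. Qed.
#[export] Hint Resolve cl_num : clos.

Lemma subst_iter n : forall f x k u, subst (Nat.iter n (App f) x) k u = Nat.iter n (App (subst f k u)) (subst x k u).
Proof. induction n; intros; simpl; auto. rewrite IHn; auto. Qed.
Lemma lift_iter n : forall f x k c, lift k c (Nat.iter n (App f) x) = Nat.iter n (App (lift k c f)) (lift k c x).
Proof. induction n; intros; simpl; auto. rewrite IHn; auto. Qed.

Lemma iter_conv n : forall f f' x x', conv f f' -> conv x x' -> conv (Nat.iter n (App f) x) (Nat.iter n (App f') x').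
Proof. induction n; intros; simpl; auto. rewrite IHn, H; eauto. reflexivity. Qed.

Lemma num_app n f x : conv (App (App (num n) f) x) (Nat.iter n (App f) x).
Proof. unfold num. rewrite beta_rule. simpl. rewrite subst_iter. simpl.
  rewrite beta_rule. rewrite subst_iter. simpl. rewrite lift_0.
  rewrite subst_lift_simpl by lia. rewrite lift_0. reflexivity. Qed.

Definition cbool (b : Datatypes.bool) := if b then TRUE else FALSE.
Arguments cbool : simpl never.
Arguments TRUE : simpl never.
Arguments FALSE : simpl never.
Lemma cl_TRUE : cl TRUE. Proof. reflexivity. Qed.
Lemma cl_FALSE : cl FALSE. Proof. reflexivity. Qed.
Lemma cl_bool b : cl (cbool b). Proof. destruct b; reflexivity. Qed.
#[export] Hint Resolve cl_TRUE cl_FALSE cl_bool : clos.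

Lemma TRUE_app a b : cl a -> conv (App (App TRUE a) b) a.
Proof. intros Ha. unfold TRUE. beta. beta. reflexivity. Qed.
Lemma FALSE_app a b : conv (App (App FALSE a) b) b.
Proof. unfold FALSE. beta. beta. reflexivity. Qed.
Lemma bool_app b x y : cl x -> conv (App (App (cbool b) x) y) (if b then x else y).
Proof. destruct b; intros; [apply TRUE_app | apply FALSE_app]; auto. Qed.

Lemma iter_inv (P : nat -> term) (Fn x0 : term) : conv x0 (P 0) ->
  (forall k, conv (App Fn (P k)) (P (S k))) -> forall n, conv (Nat.iter n (App Fn) x0) (P n).
Proof. intros H0 HS n. induction n; simpl; auto. rewrite IHn. auto. Qed.

Definition PR := Lam (Lam (Lam (App (App (Var 0) (Var 2)) (Var 1)))).

Lemma cl_PR : cl PR. Proof. vm_compute. reflexivity. Qed.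
#[export] Hint Resolve cl_PR : clos.
Notation pr a b := (App (App PR a) b).

Definition FST := Lam (App (Var 0) TRUE).
Definition SND := Lam (App (Var 0) FALSE).

Lemma cl_FST : cl FST. Proof. vm_compute. reflexivity. Qed.
Lemma cl_SND : cl SND. Proof. vm_compute. reflexivity. Qed.
#[export] Hint Resolve cl_FST cl_SND : clos.

Lemma pr_app a b f : cl a -> cl b -> conv (App (pr a b) f) (App (App f a) b).
Proof. intros Ha Hb. unfold PR. beta. beta. beta. reflexivity. Qed.
Lemma fst_pr a b : cl a -> cl b -> conv (App FST (pr a b)) a.
Proof. intros Ha Hb. unfold FST at 1. beta. rewrite pr_app by auto. apply TRUE_app; auto. Qed.
Lemma snd_pr a b : cl a -> cl b -> conv (App SND (pr a b)) b.
Proof. intros Ha Hb. unfold SND at 1. beta. rewrite pr_app by auto. apply FALSE_app; auto. Qed.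

Definition SUCC := Lam (Lam (Lam (App (Var 1) (App (App (Var 2) (Var 1)) (Var 0))))).

Lemma cl_SUCC : cl SUCC. Proof. vm_compute. reflexivity. Qed.
#[export] Hint Resolve cl_SUCC : clos.
Lemma succ_num n : conv (App SUCC (num n)) (num (S n)).
Proof. unfold SUCC. beta. rewrite num_app. reflexivity. Qed.

Definition ISZERO := Lam (App (App (Var 0) (Lam FALSE)) TRUE).

Lemma cl_ISZERO : cl ISZERO. Proof. vm_compute. reflexivity. Qed.
#[export] Hint Resolve cl_ISZERO : clos.
Lemma iszero_num n : conv (App ISZERO (num n)) (cbool (n =? 0)).
Proof. unfold ISZERO. beta. rewrite num_app.
  apply (iter_inv (fun k => cbool (k =? 0))). reflexivity.
  intros k. beta. reflexivity. Qed.

Definition PSTEP := Lam (pr (App SND (Var 0)) (App SUCC (App SND (Var 0)))).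

Lemma cl_PSTEP : cl PSTEP. Proof. vm_compute. reflexivity. Qed.
#[export] Hint Resolve cl_PSTEP : clos.
Definition PRED := Lam (App FST (App (App (Var 0) PSTEP) (pr (num 0) (num 0)))).

Lemma cl_PRED : cl PRED. Proof. vm_compute. reflexivity. Qed.
#[export] Hint Resolve cl_PRED : clos.
Lemma pred_num n : conv (App PRED (num n)) (num (pred n)).
Proof. unfold PRED. beta. rewrite num_app.
  rewrite (iter_inv (fun k => pr (num (pred k)) (num k))). apply fst_pr; clos.
  reflexivity. intros k. unfold PSTEP at 1. beta. rewrite snd_pr by clos. rewrite succ_num. reflexivity. Qed.

Definition SUB := Lam (Lam (App (App (Var 0) PRED) (Var 1))).

Lemma cl_SUB : cl SUB. Proof. vm_compute. reflexivity. Qed.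
#[export] Hint Resolve cl_SUB : clos.
Lemma sub_num a b : conv (App (App SUB (num a)) (num b)) (num (a - b)).
Proof. unfold SUB. beta. beta. rewrite num_app.
  apply (iter_inv (fun k => num (a - k))). rewrite Nat.sub_0_r; reflexivity.
  intros k. rewrite pred_num. f_equiv. f_equal. lia. Qed.

Definition AND := Lam (Lam (App (App (Var 1) (Var 0)) FALSE)).

Lemma cl_AND : cl AND. Proof. vm_compute. reflexivity. Qed.
#[export] Hint Resolve cl_AND : clos.
Lemma and_bool x y : conv (App (App AND (cbool x)) (cbool y)) (cbool (x && y)).
Proof. unfold AND. beta. beta. rewrite bool_app by clos. destruct x; reflexivity. Qed.

Definition EQN := Lam (Lam (App (App AND (App ISZERO (App (App SUB (Var 1)) (Var 0))))
                                   (App ISZERO (App (App SUB (Var 0)) (Var 1))))).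

Lemma cl_EQN : cl EQN. Proof. vm_compute. reflexivity. Qed.
#[export] Hint Resolve cl_EQN : clos.
Lemma eq_num a b : conv (App (App EQN (num a)) (num b)) (cbool (a =? b)).
Proof. unfold EQN. beta. beta. rewrite !sub_num, !iszero_num, and_bool.
  replace (andb (a - b =? 0) (b - a =? 0)) with (a =? b). reflexivity.
  destruct (Nat.eqb_spec a b); destruct (Nat.eqb_spec (a - b) 0); destruct (Nat.eqb_spec (b - a) 0); simpl; auto; lia. Qed.

Definition tlc (n : nat) := match n with 0 => 0 | S n' => snd (Cantor.of_nat n') end.
Definition nthc (m pc : nat) := Nat.iter pc tlc m.

Lemma nthc_S n pc : nthc n (S pc) = nthc (tlc n) pc.
Proof. unfold nthc. rewrite Nat.iter_succ_r. reflexivity. Qed.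

Lemma fetch_aux fuel : forall n, n <= fuel -> forall pc, nth_error (decode_prog_aux fuel n) pc =
  match nthc n pc with 0 => None | S k => Some (decode_instr (fst (Cantor.of_nat k))) end.
Proof. induction fuel; intros n Hn pc.
 - assert (n = 0) by lia. subst. simpl. unfold nthc.
   assert (E : forall p, Nat.iter p tlc 0 = 0) by (induction p; simpl; auto; rewrite IHp; auto).
   rewrite E. destruct pc; auto.
 - destruct n as [|n'].
   + simpl. unfold nthc.
     assert (E : forall p, Nat.iter p tlc 0 = 0) by (induction p; simpl; auto; rewrite IHp; auto).
     rewrite E. destruct pc; auto.
   + simpl. destruct (Cantor.of_nat n') as [a b] eqn:Eab. destruct pc as [|pc].
     * simpl. rewrite Eab. auto.
     * rewrite nthc_S. simpl tlc. rewrite Eab. simpl. rewrite IHfuel.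
       -- reflexivity.
       -- pose proof (Cantor.to_nat_non_decreasing a b). rewrite <- Eab in H.
          rewrite Cantor.cancel_to_of in H. lia. Qed.

Lemma fetch m pc : nth_error (decode m) pc =
  match nthc m pc with 0 => None | S k => Some (decode_instr (fst (Cantor.of_nat k))) end.
Proof. apply fetch_aux. lia. Qed.

Definition exec_c (a pc : nat) (s : regs) : nat * regs :=
  match decode_instr a with
  | Inc r => (S pc, upd s r (S (s r)))
  | Dec r j => match s r with 0 => (j, s) | S v => (S pc, upd s r v) end
  | Orc r => (S pc, upd s r 0)
  end.

Definition stepc (m : nat) (c : nat * regs) : nat * regs :=
  let (pc, s) := c in
  match nthc m pc with 0 => (pc, s) | S k => exec_c (fst (Cantor.of_nat k)) pc s end.

Lemma iter_fix m pc s n : nthc m pc = 0 -> Nat.iter n (stepc m) (pc, s) = (pc, s).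
Proof. intros H. induction n; simpl; auto. rewrite IHn. simpl. rewrite H. auto. Qed.

Lemma run_iter m fuel : forall pc s, run empty_oracle (decode m) fuel pc s <> None <->
  nthc m (fst (Nat.iter fuel (stepc m) (pc, s))) = 0.
Proof. induction fuel; intros pc s.
 - simpl. rewrite fetch. destruct (nthc m pc); split; intros; try congruence; lia.
 - rewrite Nat.iter_succ_r. simpl (stepc m (pc, s)). simpl run. rewrite fetch.
   destruct (nthc m pc) eqn:E.
   + rewrite iter_fix by auto. simpl. rewrite E. split; congruence.
   + unfold exec_c. destruct (decode_instr (fst (Cantor.of_nat n))); try apply IHfuel.
     destruct (s n0); apply IHfuel. Qed.

Lemma K_iff m : K m <-> exists n, nthc m (fst (Nat.iter n (stepc m) (0, init m))) = 0.
Proof. unfold K, Phi. split.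
 - intros [v [fuel H]]. exists fuel. apply run_iter. congruence.
 - intros [n H]. apply run_iter in H. destruct (run empty_oracle (decode m) n 0 (init m)) eqn:E; try congruence.
   exists n0, n. auto. Qed.

Lemma divmod3_step k : (S k)/3 = (if k mod 3 =? 2 then k/3 + 1 else k/3) /\
  (S k) mod 3 = (if k mod 3 =? 2 then 0 else S (k mod 3)).
Proof. pose proof (Nat.div_mod_eq k 3). pose proof (Nat.mod_upper_bound k 3 ltac:(lia)).
  destruct (Nat.eqb_spec (k mod 3) 2).
  - split; [symmetry; apply (Nat.div_unique _ _ _ 0) | symmetry; apply (Nat.mod_unique _ _ (k/3+1))]; lia.
  - split; [symmetry; apply (Nat.div_unique _ _ _ (S (k mod 3))) | symmetry; apply (Nat.mod_unique _ _ (k/3))]; lia.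
Qed.

Definition repr (R : term) (s : nat -> nat) := cl R /\ forall i, conv (App R (num i)) (num (s i)).

Definition UPD := Lam (Lam (Lam (Lam (App (App (App (App EQN (Var 0)) (Var 2)) (Var 1)) (App (Var 3) (Var 0)))))).
Lemma cl_UPD : cl UPD. Proof. vm_compute. reflexivity. Qed.
#[export] Hint Resolve cl_UPD : clos.

Lemma upd_spec R s r v : repr R s -> repr (App (App (App UPD R) (num r)) (num v)) (upd s r v).
Proof. intros [HcR HR]. split. clos. intros i. unfold UPD. beta. beta. beta. beta.
  rewrite eq_num, HR, bool_app by clos. unfold upd. destruct (i =? r); reflexivity. Qed.

Definition OFSTEP := Lam (App (App (App ISZERO (App FST (Var 0))) (pr (App SUCC (App SND (Var 0))) (num 0)))
   (pr (App PRED (App FST (Var 0))) (App SUCC (App SND (Var 0))))).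
Lemma cl_OFSTEP : cl OFSTEP. Proof. vm_compute. reflexivity. Qed.
#[export] Hint Resolve cl_OFSTEP : clos.
Definition OFNAT := Lam (App (App (Var 0) OFSTEP) (pr (num 0) (num 0))).
Lemma cl_OFNAT : cl OFNAT. Proof. vm_compute. reflexivity. Qed.
#[export] Hint Resolve cl_OFNAT : clos.

Lemma of_nat_S k : Cantor.of_nat (S k) =
  let (x, y) := Cantor.of_nat k in match x with S x => (x, S y) | 0 => (S y, 0) end.
Proof. reflexivity. Qed.

Lemma ofnat_spec n : conv (App OFNAT (num n)) (pr (num (fst (Cantor.of_nat n))) (num (snd (Cantor.of_nat n)))).
Proof. unfold OFNAT. beta. rewrite num_app.
  apply (iter_inv (fun k => pr (num (fst (Cantor.of_nat k))) (num (snd (Cantor.of_nat k))))).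
  reflexivity. intros k. unfold OFSTEP at 1. beta.
  rewrite !fst_pr, !snd_pr by clos. rewrite iszero_num, !succ_num, pred_num, bool_app by clos.
  rewrite of_nat_S. destruct (Cantor.of_nat k) as [x y]. destruct x; simpl; reflexivity. Qed.

Definition TL := Lam (App (App (App ISZERO (Var 0)) (num 0)) (App SND (App OFNAT (App PRED (Var 0))))).
Lemma cl_TL : cl TL. Proof. vm_compute. reflexivity. Qed.
#[export] Hint Resolve cl_TL : clos.
Lemma tl_spec n : conv (App TL (num n)) (num (tlc n)).
Proof. unfold TL. beta. rewrite iszero_num, pred_num, ofnat_spec, snd_pr, bool_app by clos.
  destruct n; reflexivity. Qed.

Definition NTH := Lam (Lam (App (App (Var 0) TL) (Var 1))).
Lemma cl_NTH : cl NTH. Proof. vm_compute. reflexivity. Qed.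
#[export] Hint Resolve cl_NTH : clos.
Lemma nth_spec m pc : conv (App (App NTH (num m)) (num pc)) (num (nthc m pc)).
Proof. unfold NTH. beta. beta. rewrite num_app.
  apply (iter_inv (fun k => num (nthc m k))). reflexivity.
  intros k. rewrite tl_spec. reflexivity. Qed.

Definition DM3S := Lam (App (App (App (App EQN (App SND (Var 0))) (num 2)) (pr (App SUCC (App FST (Var 0))) (num 0)))
   (pr (App FST (Var 0)) (App SUCC (App SND (Var 0))))).
Lemma cl_DM3S : cl DM3S. Proof. vm_compute. reflexivity. Qed.
#[export] Hint Resolve cl_DM3S : clos.
Definition DM3 := Lam (App (App (Var 0) DM3S) (pr (num 0) (num 0))).
Lemma cl_DM3 : cl DM3. Proof. vm_compute. reflexivity. Qed.
#[export] Hint Resolve cl_DM3 : clos.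
Lemma dm3_spec a : conv (App DM3 (num a)) (pr (num (a / 3)) (num (a mod 3))).
Proof. unfold DM3. beta. rewrite num_app.
  apply (iter_inv (fun k => pr (num (k / 3)) (num (k mod 3)))). reflexivity.
  intros k. unfold DM3S at 1. beta. rewrite !fst_pr, !snd_pr by clos.
  rewrite eq_num, !succ_num, bool_app by clos. destruct (divmod3_step k) as [E1 E2].
  rewrite E1, E2. destruct (k mod 3 =? 2); rewrite ?Nat.add_1_r; reflexivity. Qed.

Definition INCI := Lam (Lam (Lam (pr (App SUCC (Var 1)) (App (App (App UPD (Var 0)) (Var 2)) (App SUCC (App (Var 0) (Var 2))))))).
Lemma cl_INCI : cl INCI. Proof. vm_compute. reflexivity. Qed.
#[export] Hint Resolve cl_INCI : clos.
Definition DECI := Lam (Lam (Lam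
  (App (App (App ISZERO (App (Var 0) (App FST (App OFNAT (Var 2)))))
            (pr (App SND (App OFNAT (Var 2))) (Var 0)))
       (pr (App SUCC (Var 1)) (App (App (App UPD (Var 0)) (App FST (App OFNAT (Var 2))))
                                    (App PRED (App (Var 0) (App FST (App OFNAT (Var 2)))))))))).
Lemma cl_DECI : cl DECI. Proof. vm_compute. reflexivity. Qed.
#[export] Hint Resolve cl_DECI : clos.
Definition ORCI := Lam (Lam (Lam (pr (App SUCC (Var 1)) (App (App (App UPD (Var 0)) (Var 2)) (num 0))))).
Lemma cl_ORCI : cl ORCI. Proof. vm_compute. reflexivity. Qed.
#[export] Hint Resolve cl_ORCI : clos.

Definition EXEC := Lam (Lam (Lam
  (App (App (App (App EQN (App SND (App DM3 (Var 2)))) (num 0))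
            (App (App (App INCI (App FST (App DM3 (Var 2)))) (Var 1)) (Var 0)))
       (App (App (App (App EQN (App SND (App DM3 (Var 2)))) (num 1))
                 (App (App (App DECI (App FST (App DM3 (Var 2)))) (Var 1)) (Var 0)))
            (App (App (App ORCI (App FST (App DM3 (Var 2)))) (Var 1)) (Var 0)))))).
Lemma cl_EXEC : cl EXEC. Proof. vm_compute. reflexivity. Qed.
#[export] Hint Resolve cl_EXEC : clos.

Lemma inci_spec q pc R s : repr R s ->
  conv (App (App (App INCI (num q)) (num pc)) R) (pr (num (S pc)) (App (App (App UPD R) (num q)) (num (S (s q))))).
Proof. intros [HcR HRi]. unfold INCI. beta. beta. beta. rewrite !succ_num, HRi, succ_num. reflexivity. Qed.

Lemma orci_spec q pc R : cl R ->
  conv (App (App (App ORCI (num q)) (num pc)) R) (pr (num (S pc)) (App (App (App UPD R) (num q)) (num 0))).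
Proof. intros HcR. unfold ORCI. beta. beta. beta. rewrite !succ_num. reflexivity. Qed.

Lemma deci_spec q pc R s : repr R s ->
  conv (App (App (App DECI (num q)) (num pc)) R)
    (let (r, j) := Cantor.of_nat q in
     match s r with 0 => pr (num j) R | S v => pr (num (S pc)) (App (App (App UPD R) (num r)) (num v)) end).
Proof. intros [HcR HRi]. destruct (Cantor.of_nat q) as [r j] eqn:Erj.
  unfold DECI. beta. beta. beta. rewrite ofnat_spec, Erj. simpl. rewrite !fst_pr, !snd_pr by clos.
  rewrite HRi, iszero_num, pred_num, succ_num, bool_app by clos.
  destruct (s r) as [|v]; simpl; reflexivity. Qed.

Lemma exec_conv a pc R : cl R -> conv (App (App (App EXEC (num a)) (num pc)) R)
  (if a mod 3 =? 0 then App (App (App INCI (num (a / 3))) (num pc)) R else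
   if a mod 3 =? 1 then App (App (App DECI (num (a / 3))) (num pc)) R else
   App (App (App ORCI (num (a / 3))) (num pc)) R).
Proof. intros HcR. unfold EXEC. beta. beta. beta.
  rewrite dm3_spec, !fst_pr, !snd_pr, !eq_num by clos. rewrite bool_app by clos.
  destruct (a mod 3 =? 0); [reflexivity|]. rewrite bool_app by clos. reflexivity. Qed.

Lemma exec_spec a pc R s : repr R s -> exists R', repr R' (snd (exec_c a pc s)) /\
  conv (App (App (App EXEC (num a)) (num pc)) R) (pr (num (fst (exec_c a pc s))) R').
Proof. intros HR. pose proof HR as [HcR HRi]. pose proof (exec_conv a pc R HcR) as EC.
  pose proof (deci_spec (a / 3) pc R s HR) as DC.
  unfold exec_c, decode_instr. destruct (a mod 3) as [|[|k]] eqn:E; cbn -[Nat.div Cantor.of_nat upd] in EC |- *.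
  - eexists; split; [apply upd_spec; eauto|]. rewrite EC. apply inci_spec; auto.
  - rewrite DC in EC. destruct (Cantor.of_nat (a / 3)) as [r j] eqn:Erj.
    destruct (s r) as [|v]; cbn -[Nat.div Cantor.of_nat upd] in EC |- *.
    + exists R; split; auto.
    + eexists; split; [apply upd_spec; eauto|]. exact EC.
  - eexists; split; [apply upd_spec; eauto|]. rewrite EC. apply orci_spec; auto. Qed.

Definition STEPM := Lam (Lam
  (App (App (App ISZERO (App (App NTH (Var 1)) (App FST (Var 0)))) (Var 0))
       (App (App (App EXEC (App FST (App OFNAT (App PRED (App (App NTH (Var 1)) (App FST (Var 0)))))))
                 (App FST (Var 0))) (App SND (Var 0))))).
Lemma cl_STEPM : cl STEPM. Proof. vm_compute. reflexivity. Qed.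
#[export] Hint Resolve cl_STEPM : clos.

Lemma stepm_conv m pc R : cl R -> conv (App (App STEPM (num m)) (pr (num pc) R))
  (if nthc m pc =? 0 then pr (num pc) R else
   App (App (App EXEC (num (fst (Cantor.of_nat (pred (nthc m pc)))))) (num pc)) R).
Proof. intros HcR. unfold STEPM. beta. beta. rewrite !fst_pr, !snd_pr, nth_spec by clos.
  rewrite iszero_num, pred_num, ofnat_spec, fst_pr, bool_app by clos. reflexivity. Qed.

Lemma stepm_spec m c R : repr R (snd c) -> exists R', repr R' (snd (stepc m c)) /\
  conv (App (App STEPM (num m)) (pr (num (fst c)) R)) (pr (num (fst (stepc m c))) R').
Proof. destruct c as [pc s]. simpl. intros HR. pose proof HR as [HcR HRi].
  pose proof (stepm_conv m pc R HcR) as SC.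
  destruct (nthc m pc) as [|k] eqn:E; simpl in SC |- *.
  - exists R; split; auto.
  - destruct (exec_spec (fst (Cantor.of_nat k)) pc R s HR) as [R' [H1 H2]].
    exists R'; split; auto. rewrite SC. exact H2. Qed.

Definition INIT := Lam (Lam (App (App (App ISZERO (Var 0)) (Var 1)) (num 0))).
Lemma cl_INIT : cl INIT. Proof. vm_compute. reflexivity. Qed.
#[export] Hint Resolve cl_INIT : clos.
Lemma init_spec m : repr (App INIT (num m)) (init m).
Proof. split. clos. intros i. unfold INIT. beta. beta. rewrite iszero_num, bool_app by clos.
  unfold init. destruct (i =? 0); reflexivity. Qed.

Lemma iterate_spec m n : exists R, repr R (snd (Nat.iter n (stepc m) (0, init m))) /\
  conv (Nat.iter n (App (App STEPM (num m))) (pr (num 0) (App INIT (num m))))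
       (pr (num (fst (Nat.iter n (stepc m) (0, init m)))) R).
Proof. induction n.
 - exists (App INIT (num m)). split. apply init_spec. reflexivity.
 - destruct IHn as [R [HR HC]]. simpl.
   destruct (stepm_spec m _ _ HR) as [R' [H1 H2]]. exists R'; split; auto. rewrite HC. exact H2. Qed.

Definition GG := Lam (Lam (App ISZERO (App (App NTH (Var 1))
   (App FST (App (App (Var 0) (App STEPM (Var 1))) (pr (num 0) (App INIT (Var 1)))))))).
Lemma cl_GG : cl GG. Proof. vm_compute. reflexivity. Qed.
#[export] Hint Resolve cl_GG : clos.
Lemma gg_spec m n : conv (App (App GG (num m)) (num n))
  (cbool (nthc m (fst (Nat.iter n (stepc m) (0, init m))) =? 0)).
Proof. unfold GG. beta. beta. rewrite num_app.
  destruct (iterate_spec m n) as [R [[HcR _] HC]]. rewrite HC.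
  rewrite fst_pr, nth_spec, iszero_num by clos. reflexivity. Qed.

Definition W := Lam (Lam (Lam (App (App (App (App GG (Var 2)) (Var 0)) TRUE) (App (App (Var 1) (Var 1)) (App SUCC (Var 0)))))).
Lemma cl_W : cl W. Proof. vm_compute. reflexivity. Qed.
#[export] Hint Resolve cl_W : clos.
Definition Q := Lam (App (App (App W (Var 0)) (App W (Var 0))) (num 0)).
Lemma cl_Q : cl Q. Proof. vm_compute. reflexivity. Qed.
#[export] Hint Resolve cl_Q : clos.

Definition gm (m n : nat) := nthc m (fst (Nat.iter n (stepc m) (0, init m))) =? 0.

Definition WW m := App (App W (num m)) (App W (num m)).

Lemma W_unfold m n : conv (App (WW m) (num n)) (App (App (cbool (gm m n)) TRUE) (App (WW m) (num (S n)))).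
Proof. unfold WW, W at 1. beta. beta. beta. rewrite gg_spec, succ_num. reflexivity. Qed.

Lemma Q_unfold m : conv (App Q (num m)) (App (WW m) (num 0)).
Proof. unfold Q. beta. reflexivity. Qed.

Lemma Q_true m : K m -> conv (App Q (num m)) TRUE.
Proof. intros HK. apply K_iff in HK. destruct HK as [n Hn].
  assert (Hg : gm m n = true) by (unfold gm; rewrite Hn; reflexivity).
  assert (HH : forall j, j <= n -> conv (App (WW m) (num (n - j))) TRUE).
  { induction j; intros Hj.
    - rewrite W_unfold. rewrite Nat.sub_0_r, Hg. apply bool_app with (b := true). clos.
    - rewrite W_unfold. replace (S (n - S j)) with (n - j) by lia. rewrite IHj by lia.
      destruct (gm m (n - S j)); rewrite bool_app by clos; reflexivity. }
  rewrite Q_unfold. specialize (HH n ltac:(lia)). rewrite Nat.sub_diag in HH. exact HH. Qed.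

Definition r0 : nat -> Dm := fun _ _ => False.

Lemma sem_cl t r : cl t -> sem t r = sem t r0.
Proof. intros H. apply (sem_closed t 0); auto. intros; lia. Qed.

Lemma sem_FALSE X Y : papp (papp (sem FALSE r0) X) Y = Y.
Proof. unfold FALSE. change (sem (Lam (Lam (Var 0))) r0) with (plam (fun d => sem (Lam (Var 0)) (scons d r0))).
  rewrite papp_plam. change (sem (Lam (Var 0)) (scons X r0)) with (plam (fun d => sem (Var 0) (scons d (scons X r0)))).
  rewrite papp_plam. reflexivity. Qed.

Section Neg.
Variable m : nat.
Hypothesis Hg : forall n, gm m n = false.

Definition AA := sem (App W (num m)) r0.
Definition GMs := sem (App GG (num m)) r0.
Definition SUs := sem SUCC r0.
Definition Ts := sem TRUE r0.

Lemma AA_mem e d x : AA (Cantor.to_nat (e, Cantor.to_nat (d, x))) ->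
  papp (papp (papp GMs (fin d)) Ts) (papp (papp (fin e) (fin e)) (papp SUs (fin d))) x.
Proof. unfold AA. intros H.
  assert (E : conv (App W (num m)) (Lam (Lam (App (App (App (App GG (num m)) (Var 0)) TRUE) (App (App (Var 1) (Var 1)) (App SUCC (Var 0))))))).
  { unfold W. beta. reflexivity. }
  rewrite (sem_beta_conv _ _ E) in H. cbn [sem] in H. unfold plam in H.
  rewrite Cantor.cancel_of_to in H. cbn [fst snd scons] in H. rewrite Cantor.cancel_of_to in H.
  cbn [fst snd scons] in H.
  rewrite (sem_cl GG), (sem_cl (num m)), (sem_cl TRUE), (sem_cl SUCC) in H by clos.
  exact H. Qed.

Lemma inner e d n x : sub (fin d) (sem (num n) r0) -> AA (Cantor.to_nat (e, Cantor.to_nat (d, x))) ->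
  papp (papp (fin e) (fin e)) (sem (num (S n)) r0) x.
Proof. intros Hd H. apply AA_mem in H.
  assert (S1 : sub (papp GMs (fin d)) (sem FALSE r0)).
  { intros y Hy. assert (Hy' : sem (App (App GG (num m)) (num n)) r0 y).
    { unfold GMs in Hy. cbn [sem] in Hy |- *. revert Hy. apply papp_mono; auto. intros z; auto. }
    rewrite (sem_beta_conv _ _ (gg_spec m n)) in Hy'. fold (gm m n) in Hy'. rewrite Hg in Hy'. exact Hy'. }
  assert (S2 : sub (papp SUs (fin d)) (sem (num (S n)) r0)).
  { rewrite <- (sem_beta_conv _ _ (succ_num n)). cbn [sem]. fold SUs. apply papp_mono; auto. intros z; auto. }
  assert (H1 : papp (papp (sem FALSE r0) Ts) (papp (papp (fin e) (fin e)) (sem (num (S n)) r0)) x).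
  { revert H. apply papp_mono. apply papp_mono; auto. intros z; auto.
    apply papp_mono; auto. intros z; auto. }
  rewrite sem_FALSE in H1. exact H1. Qed.

Lemma claim : forall e, sub (fin e) AA -> forall n x, ~ papp (papp (fin e) (fin e)) (sem (num n) r0) x.
Proof. intros e. induction e as [e IH] using (well_founded_induction lt_wf).
  intros He n x [d [Hd [e' [He' Hx]]]].
  assert (Hlt : e' < e).
  { apply testbit_lt in Hx. pose proof (Cantor.to_nat_non_decreasing e' (Cantor.to_nat (d, x))). lia. }
  apply (IH e' Hlt (fun y Hy => He y (He' y Hy)) (S n) x).
  apply (inner e' d n x Hd (He _ Hx)). Qed.

Lemma Q_empty x : ~ sem (App Q (num m)) r0 x.
Proof. intros H. rewrite (sem_beta_conv _ _ (Q_unfold m)) in H. unfold WW in H. cbn [sem] in H.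
  destruct H as [d [Hd [e [He Hx]]]]. fold AA in He, Hx.
  apply (claim e He 1 x). apply (inner e d 0 x Hd Hx). Qed.
End Neg.

Lemma Q_false m : ~ K m -> ~ betaeta_conv (App Q (num m)) TRUE.
Proof. intros HK Hc. destruct (conv_TRUE_sem _ Hc r0) as [x Hx].
  apply (Q_empty m) with x; auto. intros n. unfold gm.
  destruct (nthc m (fst (Nat.iter n (stepc m) (0, init m))) =? 0) eqn:E; auto.
  exfalso. apply HK. apply K_iff. exists n. apply Nat.eqb_eq; auto. Qed.

Definition exec1 (X : nat -> bool) (i : instr) (pc : nat) (s : regs) : nat * regs :=
  match i with
  | Inc r => (S pc, upd s r (S (s r)))
  | Dec r j => match s r with 0 => (j, s) | S v => (S pc, upd s r v) end
  | Orc r => (S pc, upd s r (if X (s r) then 1 else 0))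
  end.

Definition step1 X (p : prog) (c c' : nat * regs) :=
  exists i, nth_error p (fst c) = Some i /\ c' = exec1 X i (fst c) (snd c).

Lemma run_star X p fuel : forall pc s v, run X p fuel pc s = Some v ->
  exists pc' s', star (step1 X p) (pc, s) (pc', s') /\ nth_error p pc' = None /\ s' 0 = v.
Proof. induction fuel; intros pc s v H; simpl in H; destruct (nth_error p pc) as [i|] eqn:E.
 - discriminate.
 - injection H; intros; subst. exists pc, s. repeat split; auto. apply st_refl.
 - assert (Hs : step1 X p (pc, s) (exec1 X i pc s)) by (exists i; auto).
   destruct i as [r|r j|r]; simpl in H, Hs.
   + destruct (IHfuel _ _ _ H) as [pc' [s' [H1 H2]]]. exists pc', s'. split; auto. eapply st_step; eauto.
   + destruct (s r) eqn:Er; destruct (IHfuel _ _ _ H) as [pc' [s' [H1 H2]]]; exists pc', s'; split; auto; eapply st_step; eauto.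
   + destruct (IHfuel _ _ _ H) as [pc' [s' [H1 H2]]]. exists pc', s'. split; auto. eapply st_step; eauto.
 - injection H; intros; subst. exists pc, s. repeat split; auto. apply st_refl. Qed.

Lemma star_run X p c c' : star (step1 X p) c c' -> nth_error p (fst c') = None ->
  exists fuel, run X p fuel (fst c) (snd c) = Some (snd c' 0).
Proof. induction 1 as [c|c c1 c2 [i [Hi Hc1]] _ IH]; intros Hn.
 - exists 0. destruct c; simpl in *. rewrite Hn. auto.
 - destruct (IH Hn) as [fuel Hf]. exists (S fuel). destruct c as [pc s]. simpl in *. rewrite Hi.
   subst c1. destruct i as [r|r j|r]; simpl in *; auto. destruct (s r); auto. Qed.

Definition iregs (i : instr) := match i with Inc r => r | Dec r _ => r | Orc r => r end.
Definition maxreg (p : prog) := fold_right (fun i m => Nat.max (iregs i) m) 0 p.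

Lemma maxreg_nth p : forall pc i, nth_error p pc = Some i -> iregs i <= maxreg p.
Proof. induction p; intros pc i H; destruct pc; simpl in H; try discriminate.
 - injection H; intros; subst. simpl. lia.
 - apply IHp in H. simpl. lia. Qed.

Lemma star_regs X p c c' : star (step1 X p) c c' -> forall r, maxreg p < r -> snd c' r = snd c r.
Proof. induction 1 as [c|c c1 c2 [i [Hi Hc1]] _ IH]; intros r Hr; auto.
  rewrite IH by auto. subst c1. apply maxreg_nth in Hi. destruct c as [pc s].
  destruct i as [q|q j|q]; simpl in *; unfold upd; try (destruct (Nat.eqb_spec r q); [lia|auto]).
  destruct (s q); simpl; auto. unfold upd. destruct (Nat.eqb_spec r q); [lia|auto]. Qed.

Definition reloc (base len j : nat) := if j <? len then base + j else base + len.
Definition shift_instr base len (i : instr) :=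
  match i with Inc r => Inc (r + 2) | Dec r j => Dec (r + 2) (reloc base len j) | Orc r => Orc (r + 2) end.
Definition shiftp base (p : prog) := map (shift_instr base (length p)) p.

Definition subl (P : prog) (b : nat) (B : prog) := forall i x, nth_error B i = Some x -> nth_error P (b + i) = Some x.

Lemma subl_refl B : subl B 0 B.
Proof. intros i x H; auto. Qed.
Lemma subl_app_l A Q b B : subl A b B -> subl (A ++ Q) b B.
Proof. intros H i x Hx. rewrite nth_error_app1; auto. apply nth_error_Some. rewrite (H _ _ Hx). congruence. Qed.
Lemma subl_app_r A Q b B : subl Q b B -> subl (A ++ Q) (length A + b) B.
Proof. intros H i x Hx. rewrite nth_error_app2 by lia. replace (length A + b + i - length A) with (b + i) by lia. auto. Qed.
Lemma subl_one P q i : subl P q [i] -> nth_error P q = Some i.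
Proof. intros H. rewrite <- (Nat.add_0_r q). apply H. reflexivity. Qed.

Lemma subl_hd P q x B : subl P q (x :: B) -> nth_error P q = Some x.
Proof. intros H. rewrite <- (Nat.add_0_r q). apply H. reflexivity. Qed.
Lemma subl_tl P q x B : subl P q (x :: B) -> subl P (S q) B.
Proof. intros H i y Hy. replace (S q + i) with (q + S i) by lia. apply H. auto. Qed.

Definition corr (s S : regs) := forall r, S (r + 2) = s r.

Lemma sim_step X P base p pc s pc' s' T : subl P base (shiftp base p) ->
  step1 X p (pc, s) (pc', s') -> corr s T ->
  exists S', step1 X P (base + pc, T) (reloc base (length p) pc', S') /\ corr s' S' /\ S' 0 = T 0 /\ S' 1 = T 1.
Proof. intros Hsub [i [Hi He]] Hc. simpl in Hi, He.
  assert (Hlt : pc < length p) by (apply nth_error_Some; congruence).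
  assert (HP : nth_error P (base + pc) = Some (shift_instr base (length p) i)).
  { apply Hsub. unfold shiftp. rewrite nth_error_map, Hi. reflexivity. }
  assert (HR : reloc base (length p) (S pc) = S (base + pc)).
  { unfold reloc. destruct (Nat.ltb_spec (S pc) (length p)); lia. }
  destruct i as [r|r j|r]; simpl in He.
  - injection He; intros; subst.
    exists (upd T (r + 2) (S (T (r + 2)))). split; [|split; [|split]].
    + exists (Inc (r+2)). split; auto. simpl. rewrite HR. reflexivity.
    + intros q. unfold upd. rewrite !Hc. destruct (Nat.eqb_spec (q+2) (r+2)); destruct (Nat.eqb_spec q r); try lia; subst; auto.
    + unfold upd. destruct (Nat.eqb_spec 0 (r+2)); auto; lia.
    + unfold upd. destruct (Nat.eqb_spec 1 (r+2)); auto; lia.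
  - destruct (s r) as [|v] eqn:Esr; injection He; intros; subst.
    + exists T. split; [|split; auto].
      exists (Dec (r+2) (reloc base (length p) j)). split; auto. simpl. rewrite Hc, Esr. reflexivity.
    + exists (upd T (r + 2) v). split; [|split; [|split]].
      * exists (Dec (r+2) (reloc base (length p) j)). split; auto. simpl. rewrite Hc, Esr, HR. reflexivity.
      * intros q. unfold upd. rewrite !Hc. destruct (Nat.eqb_spec (q+2) (r+2)); destruct (Nat.eqb_spec q r); try lia; subst; auto.
      * unfold upd. destruct (Nat.eqb_spec 0 (r+2)); auto; lia.
      * unfold upd. destruct (Nat.eqb_spec 1 (r+2)); auto; lia.
  - injection He; intros; subst.
    exists (upd T (r + 2) (if X (T (r + 2)) then 1 else 0)). split; [|split; [|split]].
    + exists (Orc (r+2)). split; auto. simpl. rewrite HR. reflexivity.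
    + intros q. unfold upd. rewrite !Hc. destruct (Nat.eqb_spec (q+2) (r+2)); destruct (Nat.eqb_spec q r); try lia; subst; auto.
    + unfold upd. destruct (Nat.eqb_spec 0 (r+2)); auto; lia.
    + unfold upd. destruct (Nat.eqb_spec 1 (r+2)); auto; lia.
Qed.

Lemma sim_star X P base p c c' : subl P base (shiftp base p) -> star (step1 X p) c c' ->
  forall T, corr (snd c) T -> exists T', star (step1 X P) (reloc base (length p) (fst c), T)
    (reloc base (length p) (fst c'), T') /\ corr (snd c') T' /\ T' 0 = T 0 /\ T' 1 = T 1.
Proof. intros Hsub H. induction H as [c|c c1 c2 Hs _ IH]; intros T Hc.
 - exists T. repeat split; auto. apply st_refl.
 - destruct c as [pc s], c1 as [pc1 s1].
   assert (Hlt : pc < length p) by (destruct Hs as [i [Hi _]]; apply nth_error_Some; simpl in Hi; congruence).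
   destruct (sim_step X P base p pc s pc1 s1 T Hsub Hs Hc) as [T1 [HT1 [Hc1 [E0 E1]]]].
   destruct (IH T1 Hc1) as [T2 [HT2 [Hc2 [F0 F1]]]].
   exists T2. split; [|split; [|split]]; auto; try congruence.
   simpl. replace (reloc base (length p) pc) with (base + pc).
   eapply st_step; eauto. unfold reloc. destruct (Nat.ltb_spec pc (length p)); lia. Qed.

Lemma sub_call X P base e x y T : Phi X e x y -> subl P base (shiftp base (decode e)) ->
  T 2 = x -> (forall r, 3 <= r -> T r = 0) ->
  exists T', star (step1 X P) (base, T) (base + length (decode e), T') /\ T' 2 = y /\
    T' 0 = T 0 /\ T' 1 = T 1 /\ (forall r, maxreg (decode e) + 3 <= r -> T' r = 0).
Proof. intros [fuel Hrun] Hsub H2 H3.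
  destruct (run_star _ _ _ _ _ _ Hrun) as [pc' [s' [Hst [Hn Hv]]]].
  assert (Hc : corr (init x) T).
  { intros r. unfold init. destruct r; simpl; auto. apply H3. lia. }
  destruct (sim_star X P base _ _ _ Hsub Hst T Hc) as [T' [HT' [Hc' [E0 E1]]]].
  simpl in HT'. exists T'.
  assert (R0 : reloc base (length (decode e)) 0 = base).
  { unfold reloc. destruct (Nat.ltb_spec 0 (length (decode e))); lia. }
  assert (R1 : reloc base (length (decode e)) pc' = base + length (decode e)).
  { unfold reloc. destruct (Nat.ltb_spec pc' (length (decode e))); auto.
    apply nth_error_None in Hn. lia. }
  rewrite R0, R1 in HT'. split; [|split; [|split; [|split]]]; auto.
  - rewrite <- (Nat.add_0_l 2), Hc'. auto.
  - intros r Hr. replace r with ((r - 2) + 2) by lia. rewrite Hc'.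
    pose proof (star_regs _ _ _ _ Hst (r - 2)) as Hreg. simpl in Hreg. simpl. rewrite Hreg by lia.
    unfold init. destruct (Nat.eqb_spec (r - 2) 0); auto; lia. Qed.

Fixpoint clr (q r n : nat) : prog :=
  match n with 0 => [] | S n => Dec r (q + 2) :: Dec 1 q :: clr (q + 2) (S r) n end.
Lemma clr_length q r n : length (clr q r n) = 2 * n.
Proof. revert q r; induction n; intros; simpl; auto. rewrite IHn. lia. Qed.

Lemma clear1 X P q r T : nth_error P q = Some (Dec r (q + 2)) -> nth_error P (S q) = Some (Dec 1 q) ->
  T 1 = 0 -> r <> 1 -> star (step1 X P) (q, T) (q + 2, fun i => if i =? r then 0 else T i).
Proof. intros H1 H2. remember (T r) as v eqn:Ev. revert T Ev. induction v; intros T Ev HT1 Hr.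
 - replace (fun i => if i =? r then 0 else T i) with T.
   apply star_one. exists (Dec r (q+2)). split; auto. simpl. rewrite <- Ev. auto.
   apply functional_extensionality; intros i. destruct (Nat.eqb_spec i r); subst; auto.
 - eapply st_step. exists (Dec r (q+2)). split; [exact H1|]. simpl. rewrite <- Ev. reflexivity.
   eapply st_step. exists (Dec 1 q). split; [exact H2|]. simpl. unfold upd at 1.
   destruct (Nat.eqb_spec 1 r); [lia|]. rewrite HT1. reflexivity.
   replace (fun i => if i =? r then 0 else T i) with (fun i => if i =? r then 0 else upd T r v i).
   apply IHv; auto. unfold upd. rewrite Nat.eqb_refl. auto.
   unfold upd. destruct (Nat.eqb_spec 1 r); auto; lia.
   apply functional_extensionality; intros i. unfold upd. destruct (Nat.eqb_spec i r); auto. Qed.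

Lemma clear_block X P n : forall q r T, subl P q (clr q r n) -> T 1 = 0 -> 2 <= r ->
  star (step1 X P) (q, T) (q + 2 * n, fun i => if (r <=? i) && (i <? r + n) then 0 else T i).
Proof. induction n; intros q r T Hs H1 Hr.
 - replace (fun i => if (r <=? i) && (i <? r + 0) then 0 else T i) with T. rewrite Nat.add_0_r. apply st_refl.
   apply functional_extensionality; intros i. destruct (Nat.leb_spec r i); destruct (Nat.ltb_spec i (r+0)); simpl; auto; lia.
 - simpl in Hs. eapply star_trans.
   apply clear1. exact (subl_hd _ _ _ _ Hs). exact (subl_hd _ _ _ _ (subl_tl _ _ _ _ Hs)). auto. lia.
   replace (q + 2 * S n) with ((q + 2) + 2 * n) by lia.
   replace (fun i => if (r <=? i) && (i <? r + S n) then 0 else T i) with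
     (fun i => if (S r <=? i) && (i <? S r + n) then 0 else (fun i => if i =? r then 0 else T i) i).
   apply IHn; auto. pose proof (subl_tl _ _ _ _ (subl_tl _ _ _ _ Hs)) as Hs2. replace (S (S q)) with (q + 2) in Hs2 by lia. exact Hs2.
   cbv beta. destruct (Nat.eqb_spec 1 r); [lia | exact H1].
   apply functional_extensionality; intros i.
   destruct (Nat.leb_spec (S r) i); destruct (Nat.ltb_spec i (S r + n)); destruct (Nat.eqb_spec i r);
   destruct (Nat.leb_spec r i); destruct (Nat.ltb_spec i (r + S n)); simpl; auto; lia. Qed.

Lemma load_block X P a : forall q T, subl P q (repeat (Inc 2) a) ->
  star (step1 X P) (q, T) (q + a, upd T 2 (T 2 + a)).
Proof. induction a; intros q T Hs.
 - replace (upd T 2 (T 2 + 0)) with T. rewrite Nat.add_0_r. apply st_refl.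
   apply functional_extensionality; intros i. unfold upd. destruct (Nat.eqb_spec i 2); subst; auto.
 - eapply st_step. exists (Inc 2). split. exact (subl_hd _ _ _ _ Hs). reflexivity.
   simpl. replace (q + S a) with (S q + a) by lia.
   replace (upd T 2 (T 2 + S a)) with (upd (upd T 2 (S (T 2))) 2 (upd T 2 (S (T 2)) 2 + a)).
   apply IHa. exact (subl_tl _ _ _ _ Hs).
   apply functional_extensionality; intros i. unfold upd. destruct (Nat.eqb_spec i 2); [subst; simpl; lia | reflexivity]. Qed.

Lemma decs_ge X P F n : forall q T, subl P q (repeat (Dec 2 F) n) -> n <= T 2 ->
  exists T', star (step1 X P) (q, T) (q + n, T') /\ T' 2 = T 2 - n /\ T' 0 = T 0 /\ T' 1 = T 1.
Proof. induction n; intros q T Hs Hn.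
 - exists T. rewrite Nat.add_0_r, Nat.sub_0_r. repeat split; auto. apply st_refl.
 - destruct (T 2) as [|v] eqn:E2; [lia|].
   destruct (IHn (S q) (upd T 2 v)) as [T' [H1 [H2 [H3 H4]]]].
   exact (subl_tl _ _ _ _ Hs).
   unfold upd; simpl. lia.
   exists T'. split; [|split; [|split]].
   + eapply st_step; [|replace (q + S n) with (S q + n) by lia; exact H1].
     exists (Dec 2 F). split. exact (subl_hd _ _ _ _ Hs). simpl. rewrite E2. reflexivity.
   + rewrite H2. unfold upd. simpl. lia.
   + rewrite H3. reflexivity.
   + rewrite H4. reflexivity. Qed.

Lemma decs_lt X P F n : forall q T, subl P q (repeat (Dec 2 F) n) -> T 2 < n ->
  exists T', star (step1 X P) (q, T) (F, T') /\ T' 0 = T 0 /\ T' 1 = T 1.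
Proof. induction n; intros q T Hs Hn; [lia|].
  destruct (T 2) as [|v] eqn:E2.
  - exists T. split; auto. apply star_one. exists (Dec 2 F). split.
    exact (subl_hd _ _ _ _ Hs). simpl. rewrite E2. reflexivity.
  - destruct (IHn (S q) (upd T 2 v)) as [T' [H1 [H3 H4]]].
    exact (subl_tl _ _ _ _ Hs).
    unfold upd; simpl. lia.
    exists T'. split; [|split].
    + eapply st_step; [|exact H1].
      exists (Dec 2 F). split. exact (subl_hd _ _ _ _ Hs). simpl. rewrite E2. reflexivity.
    + rewrite H3. reflexivity.
    + rewrite H4. reflexivity. Qed.

Definition encode_instr (i : instr) : nat :=
  match i with Inc r => 3 * r | Dec r j => 3 * Cantor.to_nat (r, j) + 1 | Orc r => 3 * r + 2 end.

Lemma divmod3 x k : k < 3 -> (3 * x + k) / 3 = x /\ (3 * x + k) mod 3 = k.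
Proof. intros Hk. split; [symmetry; apply (Nat.div_unique _ _ _ k) | symmetry; apply (Nat.mod_unique _ _ x)]; lia. Qed.

Lemma decode_encode_instr i : decode_instr (encode_instr i) = i.
Proof. destruct i as [r|r j|r]; unfold decode_instr, encode_instr.
 - destruct (divmod3 r 0 ltac:(lia)) as [E1 E2]. rewrite Nat.add_0_r in E1, E2. rewrite E2, E1. auto.
 - destruct (divmod3 (Cantor.to_nat (r, j)) 1 ltac:(lia)) as [E1 E2]. rewrite E2, E1, Cantor.cancel_of_to. auto.
 - destruct (divmod3 r 2 ltac:(lia)) as [E1 E2]. rewrite E2, E1. auto. Qed.

Fixpoint encode (p : prog) : nat :=
  match p with [] => 0 | i :: p => S (Cantor.to_nat (encode_instr i, encode p)) end.

Lemma dec_enc p : forall fuel, encode p <= fuel -> decode_prog_aux fuel (encode p) = p.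
Proof. induction p as [|i p IH]; intros fuel H.
 - simpl. destruct fuel; auto.
 - change (encode (i :: p)) with (S (Cantor.to_nat (encode_instr i, encode p))) in *.
   destruct fuel as [|fuel]; [lia|]. cbn [decode_prog_aux]. rewrite Cantor.cancel_of_to.
   rewrite decode_encode_instr, IH; auto.
   pose proof (Cantor.to_nat_non_decreasing (encode_instr i) (encode p)). lia. Qed.

Lemma decode_encode p : decode (encode p) = p.
Proof. apply dec_enc. lia. Qed.

Section Prog.
Variables (a0 c : nat) (p1 p2 : prog).
Definition Rg := Nat.max (maxreg p1) (maxreg p2).
Definition Lp := a0.
Definition Cp := Lp + 1 + length p1.
Definition Xp := Cp + 2 * Rg + 1.
Definition b0 := Xp + length p2.
Definition CMP := repeat (Dec 2 (b0 + c + 1)) c ++ [Dec 2 (b0 + c + 2); Dec 1 (b0 + c + 3); Inc 0].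
Definition PP := repeat (Inc 2) a0 ++ [Dec 0 Xp] ++ shiftp (Lp + 1) p1 ++ clr Cp 3 Rg ++ [Dec 1 Lp] ++ shiftp Xp p2 ++ CMP.
End Prog.

Lemma subl_here B Q q : q = 0 -> subl (B ++ Q) q B.
Proof. intros ->. apply subl_app_l, subl_refl. Qed.
Lemma subl_exact B q : q = 0 -> subl B q B.
Proof. intros ->. apply subl_refl. Qed.
Lemma subl_skip A Q q B : length A <= q -> subl Q (q - length A) B -> subl (A ++ Q) q B.
Proof. intros H1 H2. replace q with (length A + (q - length A)) by lia. apply subl_app_r; auto. Qed.

Ltac lens := unfold shiftp, CMP; rewrite ?length_app, ?length_map, ?repeat_length, ?clr_length; simpl length.
Ltac find_block := first
  [ apply subl_here; lens; unfold b0, Xp, Cp, Lp; lia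
  | apply subl_exact; lens; unfold b0, Xp, Cp, Lp; lia
  | apply subl_skip; [lens; unfold b0, Xp, Cp, Lp; lia | find_block] ].

Lemma PP_len a0 c p1 p2 : length (PP a0 c p1 p2) = b0 a0 p1 p2 + c + 3.
Proof. unfold PP. lens. unfold b0, Xp, Cp, Lp. lia. Qed.

Lemma step_at X P pc T i c' : nth_error P pc = Some i -> star (step1 X P) (exec1 X i pc T) c' ->
  star (step1 X P) (pc, T) c'.
Proof. intros H1 H2. eapply st_step; [|exact H2]. exists i. split; auto. Qed.

Lemma subl_trans P q B q' B' : subl P q B -> subl B q' B' -> subl P (q + q') B'.
Proof. intros H1 H2 i x Hx. rewrite <- Nat.add_assoc. apply H1, H2, Hx. Qed.

Section Main.
Variables (X : nat -> bool) (a0 c e1 e2 m : nat) (v : nat -> nat).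
Hypothesis Hv0 : v 0 = a0.
Hypothesis Hstep : forall j, Phi X e1 (v j) (v (S j)).
Notation p1 := (decode e1).
Notation p2 := (decode e2).
Notation P := (PP a0 c p1 p2).

Lemma loop k : forall T, k <= m -> T 0 = k -> T 1 = 0 -> T 2 = v (m - k) -> (forall r, 3 <= r -> T r = 0) ->
  exists T', star (step1 X P) (Lp a0, T) (Xp a0 p1 p2, T') /\ T' 0 = 0 /\ T' 1 = 0 /\ T' 2 = v m /\
    (forall r, 3 <= r -> T' r = 0).
Proof.
  assert (H0 : nth_error P (Lp a0) = Some (Dec 0 (Xp a0 p1 p2))).
  { apply subl_one. unfold PP. find_block. }
  assert (H1 : subl P (Lp a0 + 1) (shiftp (Lp a0 + 1) p1)) by (unfold PP; find_block).
  assert (H2 : subl P (Cp a0 p1) (clr (Cp a0 p1) 3 (Rg p1 p2))) by (unfold PP; find_block).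
  assert (H3 : nth_error P (Cp a0 p1 + 2 * Rg p1 p2) = Some (Dec 1 (Lp a0))).
  { apply subl_one. unfold PP. find_block. }
  induction k; intros T Hk HT0 HT1 HT2 HT3.
 - exists T. split. apply (step_at _ _ _ _ _ _ H0). simpl. rewrite HT0. apply st_refl.
   rewrite Nat.sub_0_r in HT2. auto.
 - destruct (sub_call X P (Lp a0 + 1) e1 (v (m - S k)) (v (S (m - S k))) (upd T 0 k) (Hstep _) H1)
     as [T1 [S1 [E2 [E0 [E1 E3]]]]].
   { unfold upd. simpl. auto. }
   { intros r Hr. unfold upd. destruct (Nat.eqb_spec r 0); [lia|auto]. }
   assert (E1' : T1 1 = 0) by (rewrite E1; unfold upd; simpl; auto).
   pose proof (clear_block X P (Rg p1 p2) (Cp a0 p1) 3 T1 H2 E1' ltac:(lia)) as S2.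
   destruct (IHk (fun i => if (3 <=? i) && (i <? 3 + Rg p1 p2) then 0 else T1 i)) as [T4 [S4 [F0 [F1 [F2 F3]]]]].
   { lia. }
   { simpl. rewrite E0. unfold upd. simpl. auto. }
   { simpl. auto. }
   { simpl. rewrite E2. f_equal. lia. }
   { intros r Hr. destruct (Nat.leb_spec 3 r); destruct (Nat.ltb_spec r (3 + Rg p1 p2)); simpl; auto; try lia.
     apply E3. unfold Rg in *. lia. }
   exists T4. split; auto.
   apply (step_at _ _ _ _ _ _ H0). simpl. rewrite HT0.
   replace (S (Lp a0)) with (Lp a0 + 1) by lia.
   eapply star_trans; [exact S1|]. eapply star_trans; [exact S2|].
   apply (step_at _ _ _ _ _ _ H3). simpl. rewrite E1'. exact S4. Qed.

Lemma main_run y : Phi X e2 (v m) y ->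
  exists fuel, run X P fuel 0 (init m) = Some (if y =? c then 1 else 0).
Proof.
  assert (HL : subl P 0 (repeat (Inc 2) a0)) by (unfold PP; find_block).
  assert (H4 : subl P (Xp a0 p1 p2) (shiftp (Xp a0 p1 p2) p2)) by (unfold PP; find_block).
  assert (H5 : subl P (b0 a0 p1 p2) (CMP a0 c p1 p2)) by (unfold PP; find_block).
  assert (H6 : subl P (b0 a0 p1 p2 + 0) (repeat (Dec 2 (b0 a0 p1 p2 + c + 1)) c)).
  { apply (subl_trans _ _ _ _ _ H5). unfold CMP. apply subl_app_l, subl_refl. }
  rewrite Nat.add_0_r in H6.
  assert (H7 : subl P (b0 a0 p1 p2 + c) [Dec 2 (b0 a0 p1 p2 + c + 2); Dec 1 (b0 a0 p1 p2 + c + 3); Inc 0]).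
  { apply (subl_trans _ _ _ _ _ H5). unfold CMP. apply subl_skip; rewrite repeat_length; [lia|].
    rewrite Nat.sub_diag. apply subl_refl. }
  assert (Hend : nth_error P (b0 a0 p1 p2 + c + 3) = None).
  { apply nth_error_None. rewrite PP_len. lia. }
  intros Hy.
  pose proof (load_block X P a0 0 (init m) HL) as S0. simpl in S0.
  destruct (loop m (upd (init m) 2 (init m 2 + a0))) as [T1 [S1 [E0 [E1 [E2 E3]]]]].
  { lia. } { reflexivity. } { reflexivity. }
  { unfold upd. simpl. rewrite Nat.sub_diag. auto. }
  { intros r Hr. unfold upd, init. destruct (Nat.eqb_spec r 2); [lia|]. destruct (Nat.eqb_spec r 0); auto; lia. }
  destruct (sub_call X P (Xp a0 p1 p2) e2 (v m) y T1 Hy H4 E2 E3) as [T2 [S2 [F2 [F0 [F1 _]]]]].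
  assert (Hpre : star (step1 X P) (0, init m) (b0 a0 p1 p2, T2)).
  { eapply star_trans; [exact S0|]. eapply star_trans; [exact S1|]. exact S2. }
  destruct (Nat.lt_ge_cases y c) as [Hlt|Hge].
  - destruct (decs_lt X P (b0 a0 p1 p2 + c + 1) c _ T2 H6) as [T3 [S3 [G0 G1]]]. lia.
    assert (Hfin : star (step1 X P) (0, init m) (b0 a0 p1 p2 + c + 3, T3)).
    { eapply star_trans; [exact Hpre|]. eapply star_trans; [exact S3|].
      apply (step_at _ _ _ _ (Dec 1 (b0 a0 p1 p2 + c + 3))).
      pose proof (subl_hd _ _ _ _ (subl_tl _ _ _ _ H7)) as Q. replace (S (b0 a0 p1 p2 + c)) with (b0 a0 p1 p2 + c + 1) in Q by lia. exact Q.
      simpl. rewrite G1, F1, E1. apply st_refl. }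
    destruct (star_run _ _ _ _ Hfin Hend) as [fuel Hf]. exists fuel. simpl in Hf. rewrite Hf.
    rewrite G0, F0, E0. destruct (Nat.eqb_spec y c); [lia|auto].
  - destruct (decs_ge X P (b0 a0 p1 p2 + c + 1) c _ T2 H6) as [T3 [S3 [G2 [G0 G1]]]]. lia.
    destruct (T3 2) as [|w] eqn:EW.
    + assert (Hfin : star (step1 X P) (0, init m) (b0 a0 p1 p2 + c + 3, upd T3 0 (S (T3 0)))).
      { eapply star_trans; [exact Hpre|]. eapply star_trans; [exact S3|].
        apply (step_at _ _ _ _ _ _ (subl_hd _ _ _ _ H7)). simpl. rewrite EW.
        apply (step_at _ _ _ _ (Inc 0)).
        pose proof (subl_hd _ _ _ _ (subl_tl _ _ _ _ (subl_tl _ _ _ _ H7))) as Q.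
        replace (S (S (b0 a0 p1 p2 + c))) with (b0 a0 p1 p2 + c + 2) in Q by lia. exact Q.
        simpl. replace (S (b0 a0 p1 p2 + c + 2)) with (b0 a0 p1 p2 + c + 3) by lia. apply st_refl. }
      destruct (star_run _ _ _ _ Hfin Hend) as [fuel Hf]. exists fuel. simpl in Hf. rewrite Hf.
      unfold upd. simpl. rewrite G0, F0, E0. rewrite G2, F2 in EW. destruct (Nat.eqb_spec y c); auto; lia.
    + assert (Hfin : star (step1 X P) (0, init m) (b0 a0 p1 p2 + c + 3, upd T3 2 w)).
      { eapply star_trans; [exact Hpre|]. eapply star_trans; [exact S3|].
        apply (step_at _ _ _ _ _ _ (subl_hd _ _ _ _ H7)). simpl. rewrite EW.
        apply (step_at _ _ _ _ (Dec 1 (b0 a0 p1 p2 + c + 3))).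
        pose proof (subl_hd _ _ _ _ (subl_tl _ _ _ _ H7)) as Q. exact Q.
        simpl. unfold upd at 1. simpl. rewrite G1, F1, E1. apply st_refl. }
      destruct (star_run _ _ _ _ Hfin Hend) as [fuel Hf]. exists fuel. simpl in Hf. rewrite Hf.
      unfold upd. simpl. rewrite G0, F0, E0. rewrite G2, F2 in EW. destruct (Nat.eqb_spec y c); auto; lia. Qed.
End Main.

Lemma beta_to_be t u : beta_conv t u -> betaeta_conv t u.
Proof. induction 1.
 - apply rst_step, beta_be; auto.
 - apply rst_refl.
 - apply rst_sym; auto.
 - eapply rst_trans; eauto. Qed.

Lemma main_generic (R : relation term) X : (forall t u, beta_conv t u -> R t u) ->
  (forall t u, R t u -> betaeta_conv t u) -> embeds_in_K1 R X -> turing_reducible Defs.K X.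
Proof. intros HbR HRb [f [Hresp [Hinj Happ]]].
  exists (encode (PP (f (num 0)) (f TRUE) (decode (f SUCC)) (decode (f Q)))).
  intros m.
  assert (Hstep : forall j, Phi X (f SUCC) (f (num j)) (f (num (S j)))).
  { intros j. rewrite <- (Hresp _ _ (HbR _ _ (succ_num j))). apply Happ. }
  assert (Hy : Phi X (f Q) (f (num m)) (f (App Q (num m)))) by apply Happ.
  destruct (main_run X (f (num 0)) (f TRUE) (f SUCC) (f Q) m (fun j => f (num j)) eq_refl Hstep _ Hy)
    as [fuel Hf].
  assert (HPhi : Phi X (encode (PP (f (num 0)) (f TRUE) (decode (f SUCC)) (decode (f Q)))) m
                   (if f (App Q (num m)) =? f TRUE then 1 else 0)).
  { exists fuel. rewrite decode_encode. exact Hf. }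
  split.
  - intros HK. rewrite (Hresp _ _ (HbR _ _ (Q_true m HK))), Nat.eqb_refl in HPhi. exact HPhi.
  - intros HK. destruct (Nat.eqb_spec (f (App Q (num m))) (f TRUE)) as [E|E]; auto.
    exfalso. apply (Q_false m HK). apply HRb, Hinj, E. Qed.

Theorem corollary5p2 (X : nat -> bool) :
  (embeds_in_K1 betaeta_conv X \/ embeds_in_K1 beta_conv X) ->
  turing_reducible K X.
Proof. intros [Hm|Hm].
 - apply (main_generic betaeta_conv X); auto. apply beta_to_be.
 - apply (main_generic beta_conv X); auto. apply beta_to_be. Qed.
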